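(* Fix positive constants $\gamma,\mu,\alpha,\chi,\theta,\varepsilon^*,C^*,C_\tau,\lambda_1,\lambda_2$, and assume $\lambda_1h\le\Delta t\le\lambda_2h$. Let $(\rho^k,\phi^k)$, $k\le n+1$, be the numerical solution of the scheme, with $\rho^{n+1}>0$ pointwise. Let $\check\rho^k,\check\phi^k\in\mathcal C$ ($k=n-2,\dots,n+1$) satisfy: (i) the perturbed scheme at step $n$, $$\frac{\check\rho^{n+1}-\check\rho^n}{\Delta t}=\nabla_h\cdot\big[(\tfrac32\check\rho^n-\tfrac12\check\rho^{n-1})\nabla_h\mathcal V^{n+\frac12}\big]+\tau_\rho^{n+\frac12},$$ $$\theta\frac{\check\phi^{n+1}-\check\phi^n}{\Delta t}=\frac\mu2\Delta_h(\check\phi^{n+1}+\check\phi^n)-\frac\alpha2(\check\phi^{n+1}+\check\phi^n)+\frac\chi2(\check\rho^{n+1}+\check\rho^n)+\tau_\phi^{n+\frac12},$$ where $\mathcal V^{n+\frac12}=\gamma\check S^{n+\frac12}-\frac\chi2(\check\phi^{n+1}+\check\phi^n)+\frac{\chi^2\Delta t}{4\theta}(\check\rho^{n+1}-\check\rho^n)$, $\check S^{n+\frac12}=\ln\check\rho^{n+1}-\frac{\check\rho^{n+1}-\check\rho^n}{2\check\rho^{n+1}}-\frac{(\check\rho^{n+1}-\check\rho^n)^2}{6(\check\rho^{n+1})^2}$, with $\|\tau_\rho^{n+\frac12}\|_2,\|\tau_\phi^{n+\frac12}\|_2\le C_\tau(\Delta t^4+h^4)$ and $\overline{\tau_\rho^{n+\frac12}}=0$;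 (ii) $\overline{\check\rho^k}=\overline{\rho^k}$ for all such $k$; (iii) $\varepsilon^*\le\check\rho^k\le C^*$, $\|\nabla_h\check\rho^k\|_\infty\le C^*$, $\|\check\rho^k-\check\rho^{k-1}\|_\infty\le C^*\Delta t$, $\|\nabla_h(\check\rho^k-\check\rho^{k-1})\|_\infty\le C^*\Delta t$; (iv) $\|\mathcal V^{n+\frac12}\|_\infty+\|\nabla_h\mathcal V^{n+\frac12}\|_\infty\le C^*$. Set $\tilde\rho^k=\check\rho^k-\rho^k$, $\tilde\phi^k=\check\phi^k-\phi^k$ and assume the a priori bounds $\|\tilde\rho^k\|_2,\|\tilde\phi^k\|_2\le\Delta t^{15/4}+h^{15/4}$ for $k=n,n-1,n-2$. Then, for $\Delta t$ and $h$ sufficiently small (depending only on the fixed constants), $$\|\tilde\rho^{n+1}\|_2\le\Delta t^3+h^3.$$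
   Context: Grid setting: $\Omega=(a,b)^3$, $N\in\mathbb N$, $h=(b-a)/N$, cell centers $(a+(i-\tfrac12)h,a+(j-\tfrac12)h,a+(k-\tfrac12)h)$, $1\le i,j,k\le N$. $\mathcal C$ is the space of cell-centered grid functions extended to ghost points by the discrete homogeneous Neumann condition $u_{0,j,k}=u_{1,j,k}$, $u_{N+1,j,k}=u_{N,j,k}$ (likewise in $j,k$). Operators: $D_xf_{i+1/2,j,k}=(f_{i+1,j,k}-f_{i,j,k})/h$, $A_xf_{i+1/2,j,k}=(f_{i+1,j,k}+f_{i,j,k})/2$, $d_xg_{i,j,k}=(g_{i+1/2,j,k}-g_{i-1/2,j,k})/h$ (analogously in $y,z$); $\nabla_hf=(D_xf,D_yf,D_zf)$, $\Delta_hf=d_xD_xf+d_yD_yf+d_zD_zf$, $\nabla_h\cdot(\mathcal D\nabla_hf)=d_x(A_x\mathcal D\,D_xf)+d_y(A_y\mathcal D\,D_yf)+d_z(A_z\mathcal D\,D_zf)$. $\langle f,g\rangle=h^3\sum f_{i,j,k}g_{i,j,k}$, $\|f\|_2^2=\langle f,f\rangle$, $\|f\|_\infty=\max|f_{i,j,k}|$, $\|\nabla_hf\|_\infty=\max$ of $|D_xf|,|D_yf|,|D_zf|$ over all faces, $\overline f=\frac{h^3}{|\Omega|}\sum f_{i,j,k}$. Scheme (classical case), parameters $\gamma,\mu,\alpha,\chi,\theta>0$: with $\hat\rho^{n+\frac12}=\big((\tfrac32\rho^n-\tfrac12\rho^{n-1})^2+\Delta t^8\big)^{1/2}$, $$\frac{\rho^{n+1}-\rho^n}{\Delta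 t}=\nabla_h\cdot\Big[\hat\rho^{n+\frac12}\nabla_h\Big(\gamma S^{n+\frac12}-\frac\chi2(\phi^{n+1}+\phi^n)+\frac{\chi^2\Delta t}{4\theta}(\rho^{n+1}-\rho^n)\Big)\Big],$$ $$\theta\frac{\phi^{n+1}-\phi^n}{\Delta t}=\frac\mu2\Delta_h(\phi^{n+1}+\phi^n)-\frac\alpha2(\phi^{n+1}+\phi^n)+\frac\chi2(\rho^{n+1}+\rho^n),$$ $S^{n+\frac12}=\ln\rho^{n+1}-\frac{\rho^{n+1}-\rho^n}{2\rho^{n+1}}-\frac{(\rho^{n+1}-\rho^n)^2}{6(\rho^{n+1})^2}$ pointwise. *)

(* Defs.v *)
From Stdlib Require Import Reals Lra.
Open Scope R_scope.

(** Cell-centered grid functions on (a,b)^3 with N^3 cells: only the values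
    at indices 1 <= i,j,k <= N are meaningful. *)
Definition grid := nat -> nat -> nat -> R.

(** Homogeneous discrete Neumann extension to ghost points:
    u_0 = u_1, u_{N+1} = u_N (index clamped to [1,N]). *)
Definition cl (N i : nat) : nat := Nat.min N (Nat.max 1 i).
Definition ext (N : nat) (f : grid) : grid :=
  fun i j k => f (cl N i) (cl N j) (cl N k).

(** Face operators. The value at index i of a face function in x stands for
    the face i+1/2 (i = 0..N). *)
Definition Dx (h : R) (N : nat) (f : grid) : grid :=
  fun i j k => (ext N f (S i) j k - ext N f i j k) / h.
Definition Dy (h : R) (N : nat) (f : grid) : grid :=
  fun i j k => (ext N f i (S j) k - ext N f i j k) / h.
Definition Dz (h : R) (N : nat) (f : grid) : grid :=
  fun i j k => (ext N f i j (S k) - ext N f i j k) / h.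
Definition Ax (N : nat) (f : grid) : grid :=
  fun i j k => (ext N f (S i) j k + ext N f i j k) / 2.
Definition Ay (N : nat) (f : grid) : grid :=
  fun i j k => (ext N f i (S j) k + ext N f i j k) / 2.
Definition Az (N : nat) (f : grid) : grid :=
  fun i j k => (ext N f i j (S k) + ext N f i j k) / 2.
(** d_x g_{i} = (g_{i+1/2} - g_{i-1/2})/h, used at cells i >= 1. *)
Definition dx (h : R) (g : grid) : grid :=
  fun i j k => (g i j k - g (pred i) j k) / h.
Definition dy (h : R) (g : grid) : grid :=
  fun i j k => (g i j k - g i (pred j) k) / h.
Definition dz (h : R) (g : grid) : grid :=
  fun i j k => (g i j k - g i j (pred k)) / h.

Definition divDgrad (h : R) (N : nat) (D f : grid) : grid :=
  fun i j k =>
    dx h (fun i j k => Ax N D i j k * Dx h N f i j k) i j k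
  + dy h (fun i j k => Ay N D i j k * Dy h N f i j k) i j k
  + dz h (fun i j k => Az N D i j k * Dz h N f i j k) i j k.
Definition lap (h : R) (N : nat) (f : grid) : grid :=
  fun i j k => dx h (Dx h N f) i j k + dy h (Dy h N f) i j k + dz h (Dz h N f) i j k.

Fixpoint sum1 (m : nat) (f : nat -> R) : R :=
  match m with O => 0 | S p => sum1 p f + f (S p) end.        (* i = 1..m *)
Fixpoint max1 (m : nat) (f : nat -> R) : R :=
  match m with O => 0 | S p => Rmax (max1 p f) (f (S p)) end. (* i = 1..m, f >= 0 *)
Definition max0 (m : nat) (f : nat -> R) : R := Rmax (f O) (max1 m f). (* i = 0..m *)

Definition sum3 (N : nat) (f : grid) : R :=
  sum1 N (fun i => sum1 N (fun j => sum1 N (fun k => f i j k))).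

Definition ip (h : R) (N : nat) (f g : grid) : R :=
  h ^ 3 * sum3 N (fun i j k => f i j k * g i j k).
Definition norm2 (h : R) (N : nat) (f : grid) : R := sqrt (ip h N f f).
Definition norminf (N : nat) (f : grid) : R :=
  max1 N (fun i => max1 N (fun j => max1 N (fun k => Rabs (f i j k)))).
Definition gradinf (h : R) (N : nat) (f : grid) : R :=
  Rmax (Rmax
    (max0 N (fun i => max1 N (fun j => max1 N (fun k => Rabs (Dx h N f i j k)))))
    (max1 N (fun i => max0 N (fun j => max1 N (fun k => Rabs (Dy h N f i j k))))))
    (max1 N (fun i => max1 N (fun j => max0 N (fun k => Rabs (Dz h N f i j k))))).
Definition mean (a b h : R) (N : nat) (f : grid) : R :=
  h ^ 3 / (b - a) ^ 3 * sum3 N f.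

Definition on_cells (N : nat) (P : nat -> nat -> nat -> Prop) : Prop :=
  forall i j k, (1 <= i <= N)%nat -> (1 <= j <= N)%nat -> (1 <= k <= N)%nat -> P i j k.

Definition Sh (r1 r0 : R) : R :=
  ln r1 - (r1 - r0) / (2 * r1) - (r1 - r0) ^ 2 / (6 * r1 ^ 2).

Definition potential (gamma chi theta dt : R) (r1 r0 p1 p0 : grid) : grid :=
  fun i j k => gamma * Sh (r1 i j k) (r0 i j k)
    - chi / 2 * (p1 i j k + p0 i j k)
    + chi ^ 2 * dt / (4 * theta) * (r1 i j k - r0 i j k).

Definition rhohat (dt : R) (r0 rm : grid) : grid :=
  fun i j k => sqrt ((3/2 * r0 i j k - 1/2 * rm i j k) ^ 2 + dt ^ 8).

Definition scheme_step (gamma mu alpha chi theta dt h : R) (N : nat)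
    (rho phi : nat -> grid) (n : nat) : Prop :=
  on_cells N (fun i j k =>
    (rho (S n) i j k - rho n i j k) / dt =
      divDgrad h N (rhohat dt (rho n) (rho (pred n)))
        (potential gamma chi theta dt (rho (S n)) (rho n) (phi (S n)) (phi n)) i j k)
  /\ on_cells N (fun i j k =>
    theta * (phi (S n) i j k - phi n i j k) / dt =
      mu / 2 * lap h N (fun i j k => phi (S n) i j k + phi n i j k) i j k
      - alpha / 2 * (phi (S n) i j k + phi n i j k)
      + chi / 2 * (rho (S n) i j k + rho n i j k)).

Definition perturbed_step (gamma mu alpha chi theta dt h : R) (N : nat)
    (rc pc : nat -> grid) (taur tauf : grid) (n : nat) : Prop :=
  on_cells N (fun i j k =>
    (rc (S n) i j k - rc n i j k) / dt =
      divDgrad h N (fun i j k => 3/2 * rc n i j k - 1/2 * rc (pred n) i j k)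
        (potential gamma chi theta dt (rc (S n)) (rc n) (pc (S n)) (pc n)) i j k
      + taur i j k)
  /\ on_cells N (fun i j k =>
    theta * (pc (S n) i j k - pc n i j k) / dt =
      mu / 2 * lap h N (fun i j k => pc (S n) i j k + pc n i j k) i j k
      - alpha / 2 * (pc (S n) i j k + pc n i j k)
      + chi / 2 * (rc (S n) i j k + rc n i j k)
      + tauf i j k).

Definition gsub (f g : grid) : grid := fun i j k => f i j k - g i j k.

(* Main.v *)
Require Import Defs.
From Stdlib Require Import Reals Lra Lia.
From Coquelicot Require Import Coquelicot.
Require Import Defs.
Open Scope R_scope.


Lemma sum1_ext : forall m f g, (forall i, (1 <= i <= m)%nat -> f i = g i) ->
  sum1 m f = sum1 m g.
Proof. induction m; intros f g H; simpl; auto.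
  rewrite (IHm f g); [rewrite H; auto; lia|intros; apply H; lia]. Qed.

Lemma sum1_le : forall m f g, (forall i, (1 <= i <= m)%nat -> f i <= g i) ->
  sum1 m f <= sum1 m g.
Proof. induction m; intros f g H; simpl; [lra|].
  assert (sum1 m f <= sum1 m g) by (apply IHm; intros; apply H; lia).
  assert (f (S m) <= g (S m)) by (apply H; lia). lra. Qed.

Lemma sum1_plus : forall m f g, sum1 m (fun i => f i + g i) = sum1 m f + sum1 m g.
Proof. induction m; intros; simpl; [lra|rewrite IHm; lra]. Qed.

Lemma sum1_scal : forall m c f, sum1 m (fun i => c * f i) = c * sum1 m f.
Proof. induction m; intros; simpl; [lra|rewrite IHm; lra]. Qed.

Lemma sum1_opp : forall m f, sum1 m (fun i => - f i) = - sum1 m f.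
Proof. induction m; intros; simpl; [lra|rewrite IHm; lra]. Qed.

Lemma sum1_minus : forall m f g, sum1 m (fun i => f i - g i) = sum1 m f - sum1 m g.
Proof. induction m; intros; simpl; [lra|rewrite IHm; lra]. Qed.

Lemma sum1_const : forall m c, sum1 m (fun _ => c) = INR m * c.
Proof. induction m; intros; simpl sum1; [simpl; lra|rewrite IHm, S_INR; lra]. Qed.

Lemma sum1_nonneg : forall m f, (forall i, (1 <= i <= m)%nat -> 0 <= f i) -> 0 <= sum1 m f.
Proof. intros. replace 0 with (sum1 m (fun _ => 0)).
  apply sum1_le; auto. rewrite sum1_const; lra. Qed.

Lemma sum1_ge_term : forall m f i, (forall i, (1 <= i <= m)%nat -> 0 <= f i) ->
  (1 <= i <= m)%nat -> f i <= sum1 m f.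
Proof. induction m; intros f i H Hi; [lia|]. simpl.
  destruct (Nat.eq_dec i (S m)).
  - subst. assert (0 <= sum1 m f) by (apply sum1_nonneg; intros; apply H; lia). lra.
  - assert (f i <= sum1 m f) by (apply IHm; [intros; apply H; lia|lia]).
    assert (0 <= f (S m)) by (apply H; lia). lra. Qed.

Lemma sum1_shift : forall m F, sum1 m (fun i => F (S i)) = sum1 m F - F 1%nat + F (S m).
Proof. induction m; intros; simpl; [lra|rewrite IHm; lra]. Qed.

Lemma sum1_swap : forall m p (f : nat -> nat -> R),
  sum1 m (fun i => sum1 p (fun j => f i j)) = sum1 p (fun j => sum1 m (fun i => f i j)).
Proof. induction m; intros; simpl.
  - rewrite sum1_const; lra.
  - rewrite IHm, <- sum1_plus. reflexivity. Qed.

Lemma telescope : forall (B : nat -> nat -> R) m,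
  sum1 m (fun i => B i i - B (pred i) i) =
  - sum1 m (fun i => B i (S i) - B i i) + B m (S m) - B 0%nat 1%nat.
Proof. intros B; induction m; simpl; [lra|]. rewrite IHm. destruct m; simpl; lra. Qed.

Lemma sum3_ext : forall N f g, on_cells N (fun i j k => f i j k = g i j k) ->
  sum3 N f = sum3 N g.
Proof. intros N f g H; unfold sum3; apply sum1_ext; intros; apply sum1_ext; intros;
  apply sum1_ext; intros; apply H; auto. Qed.

Lemma sum3_le : forall N f g, on_cells N (fun i j k => f i j k <= g i j k) ->
  sum3 N f <= sum3 N g.
Proof. intros N f g H; unfold sum3; apply sum1_le; intros; apply sum1_le; intros;
  apply sum1_le; intros; apply H; auto. Qed.

Lemma sum3_plus : forall N f g, sum3 N (fun i j k => f i j k + g i j k) = sum3 N f + sum3 N g.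
Proof. intros; unfold sum3; rewrite <- sum1_plus; apply sum1_ext; intros;
  rewrite <- sum1_plus; apply sum1_ext; intros; apply sum1_plus. Qed.

Lemma sum3_scal : forall N c f, sum3 N (fun i j k => c * f i j k) = c * sum3 N f.
Proof. intros; unfold sum3; rewrite <- sum1_scal; apply sum1_ext; intros;
  rewrite <- sum1_scal; apply sum1_ext; intros; apply sum1_scal. Qed.

Lemma sum3_minus : forall N f g, sum3 N (fun i j k => f i j k - g i j k) = sum3 N f - sum3 N g.
Proof. intros; unfold sum3; rewrite <- sum1_minus; apply sum1_ext; intros;
  rewrite <- sum1_minus; apply sum1_ext; intros; apply sum1_minus. Qed.

Lemma sum3_const : forall N c, sum3 N (fun _ _ _ => c) = INR N ^ 3 * c.
Proof. intros; unfold sum3. rewrite !sum1_const. ring. Qed.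

Lemma sum3_nonneg : forall N f, on_cells N (fun i j k => 0 <= f i j k) -> 0 <= sum3 N f.
Proof. intros. replace 0 with (sum3 N (fun _ _ _ => 0)). apply sum3_le; auto.
  rewrite sum3_const; ring. Qed.

Lemma sum3_ge_term : forall N f i j k, on_cells N (fun i j k => 0 <= f i j k) ->
  (1 <= i <= N)%nat -> (1 <= j <= N)%nat -> (1 <= k <= N)%nat -> f i j k <= sum3 N f.
Proof. intros N f i j k H Hi Hj Hk. unfold sum3.
  apply Rle_trans with (sum1 N (fun j => sum1 N (fun k => f i j k))).
  2:{ apply (sum1_ge_term _ (fun i => sum1 N (fun j => sum1 N (fun k => f i j k))) i); auto.
      intros; apply sum1_nonneg; intros; apply sum1_nonneg; intros; apply H; auto. }
  apply Rle_trans with (sum1 N (fun k => f i j k)).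
  2:{ apply (sum1_ge_term _ (fun j => sum1 N (fun k => f i j k)) j); auto.
      intros; apply sum1_nonneg; intros; apply H; auto. }
  apply (sum1_ge_term _ (fun k => f i j k) k); auto. Qed.


Lemma ip_nonneg : forall h N f, 0 < h -> 0 <= ip h N f f.
Proof. intros; unfold ip. apply Rmult_le_pos. apply pow_le; lra.
  apply sum3_nonneg. intros i j k _ _ _. nra. Qed.

Lemma norm2_nonneg : forall h N f, 0 <= norm2 h N f.
Proof. intros; unfold norm2; apply sqrt_pos. Qed.

Lemma norm2_sq : forall h N f, 0 < h -> norm2 h N f ^ 2 = ip h N f f.
Proof. intros; unfold norm2. rewrite <- Rsqr_pow2. apply Rsqr_sqrt. apply ip_nonneg; auto. Qed.

Lemma ip_le : forall h N f g f' g', 0 < h ->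
  on_cells N (fun i j k => f i j k * g i j k <= f' i j k * g' i j k) ->
  ip h N f g <= ip h N f' g'.
Proof. intros; unfold ip. apply Rmult_le_compat_l. apply pow_le; lra.
  apply sum3_le; auto. Qed.

Lemma ip_ext : forall h N f g f' g',
  on_cells N (fun i j k => f i j k * g i j k = f' i j k * g' i j k) ->
  ip h N f g = ip h N f' g'.
Proof. intros; unfold ip. f_equal. apply sum3_ext; auto. Qed.

Lemma ip_cs_aux : forall h N f g t, 0 < h -> 0 < t ->
  2 * ip h N f g <= t * ip h N f f + ip h N g g / t.
Proof. intros. unfold ip, Rdiv.
  assert (E: t * (h ^ 3 * sum3 N (fun i j k => f i j k * f i j k)) +
     h ^ 3 * sum3 N (fun i j k => g i j k * g i j k) * / t =
     h^3 * sum3 N (fun i j k => t * (f i j k * f i j k) + / t * (g i j k * g i j k))).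
  { rewrite sum3_plus, !sum3_scal. ring. }
  rewrite E. rewrite <- Rmult_assoc, (Rmult_comm 2), Rmult_assoc, <- sum3_scal.
  apply Rmult_le_compat_l. apply pow_le; lra.
  apply sum3_le. intros i j k _ _ _.
  assert (0 < / t) by (apply Rinv_0_lt_compat; auto).
  assert (t * / t = 1) by (field; lra).
  set (x := f i j k); set (y := g i j k).
  assert (0 <= / t * (t * x - y) ^ 2) by (apply Rmult_le_pos; [lra|apply pow2_ge_0]).
  assert (/ t * (t * x - y) ^ 2 = t * (x * x) * (t * / t) - 2 * (x * y) * (t * / t) + / t * (y * y)) by ring.
  rewrite H2 in H4. lra. Qed.

Lemma ip_cs : forall h N f g, 0 < h -> ip h N f g <= norm2 h N f * norm2 h N g.
Proof. intros h N f g Hh.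
  set (A := norm2 h N f); set (B := norm2 h N g).
  assert (HA : 0 <= A) by apply norm2_nonneg. assert (HB : 0 <= B) by apply norm2_nonneg.
  assert (HA2 : A ^ 2 = ip h N f f) by (apply norm2_sq; auto).
  assert (HB2 : B ^ 2 = ip h N g g) by (apply norm2_sq; auto).
  assert (Hk : forall e, 0 < e -> ip h N f g <= (A + e) * (B + e)).
  { intros e He. set (t := (B + e) / (A + e)).
    assert (Ht : 0 < t) by (unfold t; apply Rdiv_lt_0_compat; lra).
    pose proof (ip_cs_aux h N f g t Hh Ht) as H. rewrite <- HA2, <- HB2 in H.
    assert (t * A ^ 2 <= (A + e) * (B + e)).
    { unfold t. apply Rle_trans with ((B + e) / (A + e) * (A + e) ^ 2).
      apply Rmult_le_compat_l. left; auto. nra.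
      right; field; lra. }
    assert (B ^ 2 / t <= (A + e) * (B + e)).
    { unfold t. apply Rle_trans with ((B + e) ^ 2 / ((B + e) / (A + e))).
      apply Rmult_le_compat_r. left; apply Rinv_0_lt_compat; auto. nra.
      right; field; lra. }
    lra. }
  destruct (Rle_dec (ip h N f g) (A * B)) as [|Hn]; auto.
  exfalso. set (e := Rmin 1 ((ip h N f g - A * B) / (A + B + 2))).
  assert (He0 : 0 < e). { unfold e; apply Rmin_pos; [lra|]. apply Rdiv_lt_0_compat; lra. }
  assert (He1 : e <= 1) by (unfold e; apply Rmin_l).
  assert (He2 : e * (A + B + 2) <= ip h N f g - A * B).
  { unfold e. apply Rle_trans with ((ip h N f g - A * B) / (A + B + 2) * (A + B + 2)).
    apply Rmult_le_compat_r. lra. apply Rmin_r. right; field; lra. }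
  specialize (Hk e He0). nra. Qed.

Lemma ip_sym : forall h N f g, ip h N f g = ip h N g f.
Proof. intros; apply ip_ext; intros i j k _ _ _; ring. Qed.

Lemma ip_abs_cs : forall h N f g, 0 < h -> Rabs (ip h N f g) <= norm2 h N f * norm2 h N g.
Proof. intros. apply Rabs_le. split.
  - assert (ip h N (fun i j k => - f i j k) g <= norm2 h N (fun i j k => - f i j k) * norm2 h N g)
      by (apply ip_cs; auto).
    assert (E1 : ip h N (fun i j k => - f i j k) g = - ip h N f g).
    { unfold ip. rewrite (sum3_ext N _ (fun i j k => -1 * (f i j k * g i j k))).
      rewrite sum3_scal; ring. intros i j k _ _ _; ring. }
    assert (E2 : norm2 h N (fun i j k => - f i j k) = norm2 h N f).
    { unfold norm2; f_equal; apply ip_ext; intros i j k _ _ _; ring. }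
    rewrite E1, E2 in H0. lra.
  - apply ip_cs; auto. Qed.

Lemma norm2_le : forall h N f g, 0 < h ->
  on_cells N (fun i j k => f i j k ^ 2 <= g i j k ^ 2) -> norm2 h N f <= norm2 h N g.
Proof. intros; unfold norm2. apply sqrt_le_1_alt. apply ip_le; auto.
  intros i j k Hi Hj Hk; specialize (H0 i j k Hi Hj Hk); simpl in H0; lra. Qed.

Lemma norm2_ext : forall h N f g, on_cells N (fun i j k => f i j k = g i j k) ->
  norm2 h N f = norm2 h N g.
Proof. intros; unfold norm2; f_equal; apply ip_ext; intros i j k Hi Hj Hk; rewrite H; auto. Qed.

Lemma norm2_plus : forall h N f g, 0 < h ->
  norm2 h N (fun i j k => f i j k + g i j k) <= norm2 h N f + norm2 h N g.
Proof. intros. set (F := fun i j k => f i j k + g i j k).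
  assert (0 <= norm2 h N F) by apply norm2_nonneg.
  assert (0 <= norm2 h N f) by apply norm2_nonneg.
  assert (0 <= norm2 h N g) by apply norm2_nonneg.
  assert (norm2 h N F ^ 2 <= (norm2 h N f + norm2 h N g) ^ 2).
  { rewrite norm2_sq; auto.
    assert (ip h N F F = ip h N f f + 2 * ip h N f g + ip h N g g).
    { unfold ip. rewrite (sum3_ext N _ (fun i j k => (f i j k * f i j k + 2 * (f i j k * g i j k)) + g i j k * g i j k)).
      rewrite !sum3_plus, sum3_scal; ring. intros i j k _ _ _; unfold F; ring. }
    rewrite H3. rewrite <- !norm2_sq; auto. pose proof (ip_cs h N f g H). nra. }
  nra. Qed.

Lemma norm2_scal : forall h N c f, 0 < h ->
  norm2 h N (fun i j k => c * f i j k) = Rabs c * norm2 h N f.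
Proof. intros. unfold norm2. rewrite <- (sqrt_Rsqr (Rabs c)) by apply Rabs_pos.
  rewrite <- sqrt_mult_alt by (apply Rle_0_sqr).
  f_equal. rewrite <- Rsqr_abs. unfold ip, Rsqr.
  rewrite (sum3_ext N _ (fun i j k => (c*c) * (f i j k * f i j k))). rewrite sum3_scal; ring.
  intros i j k _ _ _; ring. Qed.

Lemma norm2_minus : forall h N f g, 0 < h ->
  norm2 h N (fun i j k => f i j k - g i j k) <= norm2 h N f + norm2 h N g.
Proof. intros. rewrite (norm2_ext h N _ (fun i j k => f i j k + -1 * g i j k)).
  2:{ intros i j k _ _ _; ring. }
  eapply Rle_trans.
  apply (norm2_plus h N f (fun i j k => -1 * g i j k)); auto.
  rewrite norm2_scal; auto. replace (Rabs (-1)) with 1 by (rewrite Rabs_left; lra). lra. Qed.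

Lemma norm2_abs : forall h N f, norm2 h N (fun i j k => Rabs (f i j k)) = norm2 h N f.
Proof. intros; unfold norm2; f_equal; apply ip_ext; intros i j k _ _ _.
  rewrite <- Rabs_mult, Rabs_right; [auto|]. apply Rle_ge; nra. Qed.

Lemma pt_le_norm : forall h N f i j k, 0 < h ->
  (1 <= i <= N)%nat -> (1 <= j <= N)%nat -> (1 <= k <= N)%nat ->
  h ^ 3 * (f i j k) ^ 2 <= norm2 h N f ^ 2.
Proof. intros. rewrite norm2_sq; auto. unfold ip. apply Rmult_le_compat_l. apply pow_le; lra.
  replace (f i j k ^ 2) with ((fun i j k => f i j k * f i j k) i j k) by (simpl; ring).
  apply (sum3_ge_term N (fun i j k => f i j k * f i j k)); auto. intros a b c _ _ _; nra. Qed.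

Lemma pt_abs_le : forall h N f i j k, 0 < h ->
  (1 <= i <= N)%nat -> (1 <= j <= N)%nat -> (1 <= k <= N)%nat ->
  Rabs (f i j k) <= norm2 h N f / (h * sqrt h).
Proof. intros. pose proof (pt_le_norm h N f i j k H H0 H1 H2).
  assert (Hs : 0 < sqrt h) by (apply sqrt_lt_R0; auto).
  assert (Hsq : sqrt h * sqrt h = h) by (apply sqrt_sqrt; lra).
  assert (0 < h * sqrt h) by (apply Rmult_lt_0_compat; auto).
  apply Rmult_le_reg_r with (h * sqrt h); auto.
  unfold Rdiv; rewrite Rmult_assoc, Rinv_l, Rmult_1_r by lra.
  assert (0 <= norm2 h N f) by apply norm2_nonneg.
  assert (0 <= Rabs (f i j k) * (h * sqrt h)) by (apply Rmult_le_pos; [apply Rabs_pos|lra]).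
  apply Rsqr_incr_0_var; auto. unfold Rsqr.
  replace (Rabs (f i j k) * (h * sqrt h) * (Rabs (f i j k) * (h * sqrt h))) with
    (h^3 * (Rabs (f i j k) * Rabs (f i j k))).
  2:{ symmetry; transitivity (h^2*(Rabs (f i j k) * Rabs (f i j k))*(sqrt h*sqrt h)); [ring|]. rewrite Hsq; ring. }
  rewrite <- Rabs_mult, Rabs_right by (apply Rle_ge; nra). simpl in H3 |- *. lra. Qed.


Lemma sum1_zero : forall m f, (forall i, (1 <= i <= m)%nat -> f i = 0) -> sum1 m f = 0.
Proof. intros. rewrite (sum1_ext _ _ (fun _ => 0)); auto. rewrite sum1_const; ring. Qed.

Lemma sbp_1d : forall m (B : nat -> nat -> R), B m (S m) = 0 -> B 0%nat 1%nat = 0 ->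
  sum1 m (fun i => B i i - B (pred i) i) = - sum1 m (fun i => B i (S i) - B i i).
Proof. intros. rewrite telescope. lra. Qed.

Lemma sbp_z : forall N h (G w : grid), 0 < h ->
  (forall i j, G i j 0%nat = 0) -> (forall i j, G i j N = 0) ->
  sum3 N (fun i j k => dz h G i j k * w i j k) =
  - sum3 N (fun i j k => G i j k * (w i j (S k) - w i j k) / h).
Proof. intros N h G w Hh H0 HN. unfold sum3. rewrite <- sum1_opp. apply sum1_ext; intros i _.
  rewrite <- sum1_opp. apply sum1_ext; intros j _.
  set (B := fun k k' => G i j k * w i j k' / h).
  rewrite (sum1_ext _ _ (fun k => B k k - B (pred k) k)).
  rewrite sbp_1d. apply f_equal. apply sum1_ext; intros; unfold B; field; lra.
  unfold B; rewrite HN; field; lra. unfold B; rewrite H0; field; lra.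
  intros; unfold B, dz; field; lra. Qed.

Lemma sbp_y : forall N h (G w : grid), 0 < h ->
  (forall i k, G i 0%nat k = 0) -> (forall i k, G i N k = 0) ->
  sum3 N (fun i j k => dy h G i j k * w i j k) =
  - sum3 N (fun i j k => G i j k * (w i (S j) k - w i j k) / h).
Proof. intros N h G w Hh H0 HN. unfold sum3. rewrite <- sum1_opp. apply sum1_ext; intros i _.
  set (B := fun j j' => sum1 N (fun k => G i j k * w i j' k / h)).
  rewrite (sum1_ext _ _ (fun j => B j j - B (pred j) j)).
  rewrite sbp_1d. apply f_equal. apply sum1_ext; intros; unfold B.
  rewrite <- sum1_minus; apply sum1_ext; intros; field; lra.
  unfold B. apply sum1_zero; intros. rewrite HN; field; lra.
  unfold B. apply sum1_zero; intros. rewrite H0; field; lra.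
  intros; unfold B, dy. rewrite <- sum1_minus; apply sum1_ext; intros; field; lra. Qed.

Lemma sbp_x : forall N h (G w : grid), 0 < h ->
  (forall j k, G 0%nat j k = 0) -> (forall j k, G N j k = 0) ->
  sum3 N (fun i j k => dx h G i j k * w i j k) =
  - sum3 N (fun i j k => G i j k * (w (S i) j k - w i j k) / h).
Proof. intros N h G w Hh H0 HN. unfold sum3.
  set (B := fun i i' => sum1 N (fun j => sum1 N (fun k => G i j k * w i' j k / h))).
  rewrite (sum1_ext _ _ (fun i => B i i - B (pred i) i)).
  rewrite sbp_1d. apply f_equal. apply sum1_ext; intros; unfold B.
  rewrite <- sum1_minus; apply sum1_ext; intros. rewrite <- sum1_minus; apply sum1_ext; intros; field; lra.
  unfold B. apply sum1_zero; intros. apply sum1_zero; intros. rewrite HN; field; lra.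
  unfold B. apply sum1_zero; intros. apply sum1_zero; intros. rewrite H0; field; lra.
  intros; unfold B, dx. rewrite <- sum1_minus; apply sum1_ext; intros.
  rewrite <- sum1_minus; apply sum1_ext; intros; field; lra. Qed.


Lemma cl_in : forall N i, (1 <= i <= N)%nat -> cl N i = i.
Proof. intros; unfold cl; lia. Qed.
Lemma cl_0 : forall N, (1 <= N)%nat -> cl N 0 = 1%nat.
Proof. intros; unfold cl; lia. Qed.
Lemma cl_SN : forall N, (1 <= N)%nat -> cl N (S N) = N.
Proof. intros; unfold cl; lia. Qed.
Lemma cl_N : forall N, (1 <= N)%nat -> cl N N = N.
Proof. intros; unfold cl; lia. Qed.

Lemma ext_in : forall N f i j k, (1 <= i <= N)%nat -> (1 <= j <= N)%nat -> (1 <= k <= N)%nat ->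
  ext N f i j k = f i j k.
Proof. intros; unfold ext; rewrite !cl_in; auto. Qed.

Lemma Dx_0 : forall h N f j k, (1 <= N)%nat -> Dx h N f 0%nat j k = 0.
Proof. intros; unfold Dx, ext. replace (cl N 1) with (cl N 0) by (unfold cl; lia). unfold Rdiv; ring. Qed.
Lemma Dx_N : forall h N f j k, (1 <= N)%nat -> Dx h N f N j k = 0.
Proof. intros; unfold Dx, ext. replace (cl N (S N)) with (cl N N) by (unfold cl; lia). unfold Rdiv; ring. Qed.
Lemma Dy_0 : forall h N f i k, (1 <= N)%nat -> Dy h N f i 0%nat k = 0.
Proof. intros; unfold Dy, ext. replace (cl N 1) with (cl N 0) by (unfold cl; lia). unfold Rdiv; ring. Qed.
Lemma Dy_N : forall h N f i k, (1 <= N)%nat -> Dy h N f i N k = 0.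
Proof. intros; unfold Dy, ext. replace (cl N (S N)) with (cl N N) by (unfold cl; lia). unfold Rdiv; ring. Qed.
Lemma Dz_0 : forall h N f i j, (1 <= N)%nat -> Dz h N f i j 0%nat = 0.
Proof. intros; unfold Dz, ext. replace (cl N 1) with (cl N 0) by (unfold cl; lia). unfold Rdiv; ring. Qed.
Lemma Dz_N : forall h N f i j, (1 <= N)%nat -> Dz h N f i j N = 0.
Proof. intros; unfold Dz, ext. replace (cl N (S N)) with (cl N N) by (unfold cl; lia). unfold Rdiv; ring. Qed.

Definition facex h N (D1 D2 F1 F2 : grid) : grid := fun i j k =>
  (Ax N D1 i j k * Dx h N F1 i j k - Ax N D2 i j k * Dx h N F2 i j k) * (Dx h N F1 i j k - Dx h N F2 i j k).
Definition facey h N (D1 D2 F1 F2 : grid) : grid := fun i j k =>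
  (Ay N D1 i j k * Dy h N F1 i j k - Ay N D2 i j k * Dy h N F2 i j k) * (Dy h N F1 i j k - Dy h N F2 i j k).
Definition facez h N (D1 D2 F1 F2 : grid) : grid := fun i j k =>
  (Az N D1 i j k * Dz h N F1 i j k - Az N D2 i j k * Dz h N F2 i j k) * (Dz h N F1 i j k - Dz h N F2 i j k).

Lemma sbp_div : forall h N (D1 D2 F1 F2 : grid), 0 < h -> (1 <= N)%nat ->
  sum3 N (fun i j k => (divDgrad h N D1 F1 i j k - divDgrad h N D2 F2 i j k) * (F1 i j k - F2 i j k))
  = - (sum3 N (facex h N D1 D2 F1 F2) + sum3 N (facey h N D1 D2 F1 F2) + sum3 N (facez h N D1 D2 F1 F2)).
Proof. intros h N D1 D2 F1 F2 Hh HN.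
  set (w := fun i j k => F1 i j k - F2 i j k). set (we := ext N w).
  set (Gx := fun i j k => Ax N D1 i j k * Dx h N F1 i j k - Ax N D2 i j k * Dx h N F2 i j k).
  set (Gy := fun i j k => Ay N D1 i j k * Dy h N F1 i j k - Ay N D2 i j k * Dy h N F2 i j k).
  set (Gz := fun i j k => Az N D1 i j k * Dz h N F1 i j k - Az N D2 i j k * Dz h N F2 i j k).
  rewrite (sum3_ext N _ (fun i j k => (dx h Gx i j k * we i j k + dy h Gy i j k * we i j k) + dz h Gz i j k * we i j k)).
  2:{ intros i j k Hi Hj Hk. unfold we. rewrite ext_in by auto. unfold w, divDgrad, dx, dy, dz, Gx, Gy, Gz.
      field. lra. }
  rewrite !sum3_plus. rewrite sbp_x, sbp_y, sbp_z; auto.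
  - assert (E1 : sum3 N (fun i j k => Gx i j k * (we (S i) j k - we i j k) / h) = sum3 N (facex h N D1 D2 F1 F2)).
    { apply sum3_ext; intros i j k _ _ _. unfold facex, Gx, we, w, Dx, ext. field; lra. }
    assert (E2 : sum3 N (fun i j k => Gy i j k * (we i (S j) k - we i j k) / h) = sum3 N (facey h N D1 D2 F1 F2)).
    { apply sum3_ext; intros i j k _ _ _. unfold facey, Gy, we, w, Dy, ext. field; lra. }
    assert (E3 : sum3 N (fun i j k => Gz i j k * (we i j (S k) - we i j k) / h) = sum3 N (facez h N D1 D2 F1 F2)).
    { apply sum3_ext; intros i j k _ _ _. unfold facez, Gz, we, w, Dz, ext. field; lra. }
    rewrite E1, E2, E3. ring.
  - intros; unfold Gz; rewrite !Dz_0; auto; ring.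
  - intros; unfold Gz; rewrite !Dz_N; auto; ring.
  - intros; unfold Gy; rewrite !Dy_0; auto; ring.
  - intros; unfold Gy; rewrite !Dy_N; auto; ring.
  - intros; unfold Gx; rewrite !Dx_0; auto; ring.
  - intros; unfold Gx; rewrite !Dx_N; auto; ring.
Qed.


Lemma face_bound : forall a a' X Y c C, 0 < c -> c <= a' -> Rabs X <= C ->
  - ((a * X - a' * Y) * (X - Y)) <= (a - a') ^ 2 * C ^ 2 / (4 * c).
Proof. intros.
  assert (HX : X ^ 2 <= C ^ 2). { rewrite <- (pow2_abs X). apply pow_incr; split; [apply Rabs_pos|auto]. }
  assert (H2 : - ((a * X - a' * Y) * (X - Y)) <= (a - a') ^ 2 * X ^ 2 / (4 * a')).
  { apply Rmult_le_reg_r with (4 * a'). lra.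
    replace ((a - a') ^ 2 * X ^ 2 / (4 * a') * (4 * a')) with ((a - a') ^ 2 * X ^ 2) by (field; lra).
    assert (0 <= (2 * a' * (X - Y) + (a - a') * X) ^ 2) by apply pow2_ge_0. nra. }
  apply Rle_trans with ((a - a') ^ 2 * X ^ 2 / (4 * a')); auto.
  unfold Rdiv. apply Rle_trans with ((a - a') ^ 2 * C ^ 2 * / (4 * a')).
  apply Rmult_le_compat_r. left; apply Rinv_0_lt_compat; lra.
  apply Rmult_le_compat_l; auto. apply pow2_ge_0.
  apply Rmult_le_compat_l. apply Rmult_le_pos; apply pow2_ge_0.
  apply Rinv_le_contravar; lra. Qed.

Lemma avg_shift : forall N (E : nat -> R), (1 <= N)%nat ->
  (forall i, (1 <= i <= N)%nat -> 0 <= E i) -> E (S N) = E N ->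
  sum1 N (fun i => (E (S i) + E i) / 2) <= 2 * sum1 N E.
Proof. intros. rewrite (sum1_ext _ (fun i => (E (S i) + E i) / 2) (fun i => / 2 * E (S i) + / 2 * E i)) by (intros; field).
  rewrite sum1_plus, !sum1_scal, sum1_shift. rewrite H1.
  assert (E N <= sum1 N E) by (apply sum1_ge_term; auto; lia).
  assert (0 <= E 1%nat) by (apply H0; lia).
  assert (0 <= sum1 N E) by (apply sum1_nonneg; auto). lra. Qed.

Lemma sq_avg : forall x y, ((x + y) / 2) ^ 2 <= (x ^ 2 + y ^ 2) / 2.
Proof. intros. assert (0 <= (x - y) ^ 2) by apply pow2_ge_0. nra. Qed.

Lemma avg1 : forall p (a b : nat -> R), sum1 p (fun k => (a k + b k) / 2) = (sum1 p a + sum1 p b) / 2.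
Proof. induction p; intros; simpl; [field|rewrite IHp; field]. Qed.

Lemma avg2 : forall m p (A B : nat -> nat -> R),
  sum1 m (fun j => sum1 p (fun k => (A j k + B j k) / 2)) =
  (sum1 m (fun j => sum1 p (A j)) + sum1 m (fun j => sum1 p (B j))) / 2.
Proof. induction m; intros; simpl; [field|rewrite IHm, avg1; field]. Qed.

Lemma Ax_sq_sum : forall N g, (1 <= N)%nat ->
  sum3 N (fun i j k => Ax N g i j k ^ 2) <= 2 * sum3 N (fun i j k => g i j k ^ 2).
Proof. intros N g HN. unfold sum3.
  set (E := fun i => sum1 N (fun j => sum1 N (fun k => ext N g i j k ^ 2))).
  apply Rle_trans with (sum1 N (fun i => (E (S i) + E i) / 2)).
  { apply sum1_le; intros i Hi. unfold E. rewrite <- avg2.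
    apply sum1_le; intros j Hj. apply sum1_le; intros k Hk.
    unfold Ax. apply sq_avg. }
  replace (sum1 N (fun i => sum1 N (fun j => sum1 N (fun k => g i j k ^ 2)))) with (sum1 N E).
  apply avg_shift; auto.
  - intros; unfold E; apply sum1_nonneg; intros; apply sum1_nonneg; intros; apply pow2_ge_0.
  - unfold E, ext. rewrite cl_SN, cl_N; auto.
  - apply sum1_ext; intros; unfold E; apply sum1_ext; intros; apply sum1_ext; intros. rewrite ext_in; auto.
Qed.

Lemma Ay_sq_sum : forall N g, (1 <= N)%nat ->
  sum3 N (fun i j k => Ay N g i j k ^ 2) <= 2 * sum3 N (fun i j k => g i j k ^ 2).
Proof. intros N g HN. unfold sum3. rewrite <- sum1_scal. apply sum1_le; intros i Hi.
  set (E := fun j => sum1 N (fun k => ext N g i j k ^ 2)).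
  apply Rle_trans with (sum1 N (fun j => (E (S j) + E j) / 2)).
  { apply sum1_le; intros j Hj. unfold E. rewrite <- avg1.
    apply sum1_le; intros k Hk. unfold Ay. apply sq_avg. }
  replace (sum1 N (fun j => sum1 N (fun k => g i j k ^ 2))) with (sum1 N E).
  apply avg_shift; auto.
  - intros; unfold E; apply sum1_nonneg; intros; apply pow2_ge_0.
  - unfold E, ext. rewrite cl_SN, cl_N; auto.
  - apply sum1_ext; intros; unfold E; apply sum1_ext; intros. rewrite ext_in; auto.
Qed.

Lemma Az_sq_sum : forall N g, (1 <= N)%nat ->
  sum3 N (fun i j k => Az N g i j k ^ 2) <= 2 * sum3 N (fun i j k => g i j k ^ 2).
Proof. intros N g HN. unfold sum3. rewrite <- sum1_scal. apply sum1_le; intros i Hi.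
  rewrite <- sum1_scal. apply sum1_le; intros j Hj.
  set (E := fun k => ext N g i j k ^ 2).
  apply Rle_trans with (sum1 N (fun k => (E (S k) + E k) / 2)).
  { apply sum1_le; intros k Hk. unfold E, Az. apply sq_avg. }
  replace (sum1 N (fun k => g i j k ^ 2)) with (sum1 N E).
  apply avg_shift; auto.
  - intros; unfold E; apply pow2_ge_0.
  - unfold E, ext. rewrite cl_SN, cl_N; auto.
  - apply sum1_ext; intros; unfold E. rewrite ext_in; auto.
Qed.


Lemma sum3_opp : forall N f, sum3 N (fun i j k => - f i j k) = - sum3 N f.
Proof. intros. rewrite (sum3_ext N _ (fun i j k => -1 * f i j k)) by (intros i j k _ _ _; ring).
  rewrite sum3_scal; ring. Qed.

Lemma flux_bound : forall h N (D1 D2 F1 F2 : grid) c C, 0 < h -> (1 <= N)%nat -> 0 < c ->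
  on_cells N (fun i j k => c <= Ax N D2 i j k /\ c <= Ay N D2 i j k /\ c <= Az N D2 i j k) ->
  on_cells N (fun i j k => Rabs (Dx h N F1 i j k) <= C /\ Rabs (Dy h N F1 i j k) <= C /\ Rabs (Dz h N F1 i j k) <= C) ->
  sum3 N (fun i j k => (divDgrad h N D1 F1 i j k - divDgrad h N D2 F2 i j k) * (F1 i j k - F2 i j k))
  <= 6 * (C ^ 2 / (4 * c)) * sum3 N (fun i j k => (D1 i j k - D2 i j k) ^ 2).
Proof. intros h N D1 D2 F1 F2 c C Hh HN Hc HD HF. rewrite sbp_div; auto.
  set (g := fun i j k => D1 i j k - D2 i j k).
  assert (Hx : - sum3 N (facex h N D1 D2 F1 F2) <= C ^ 2 / (4 * c) * sum3 N (fun i j k => Ax N g i j k ^ 2)).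
  { rewrite <- sum3_scal, <- sum3_opp.
    apply sum3_le; intros i j k Hi Hj Hk. destruct (HD i j k Hi Hj Hk) as [H1 [H2 H3]].
    destruct (HF i j k Hi Hj Hk) as [G1 [G2 G3]].
    unfold facex. replace (Ax N g i j k) with (Ax N D1 i j k - Ax N D2 i j k) by (unfold Ax, g, ext; field).
    pose proof (face_bound (Ax N D1 i j k) (Ax N D2 i j k) (Dx h N F1 i j k) (Dx h N F2 i j k) c C Hc H1 G1).
    unfold Rdiv in *. lra. }
  assert (Hy : - sum3 N (facey h N D1 D2 F1 F2) <= C ^ 2 / (4 * c) * sum3 N (fun i j k => Ay N g i j k ^ 2)).
  { rewrite <- sum3_scal, <- sum3_opp.
    apply sum3_le; intros i j k Hi Hj Hk. destruct (HD i j k Hi Hj Hk) as [H1 [H2 H3]].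
    destruct (HF i j k Hi Hj Hk) as [G1 [G2 G3]].
    unfold facey. replace (Ay N g i j k) with (Ay N D1 i j k - Ay N D2 i j k) by (unfold Ay, g, ext; field).
    pose proof (face_bound (Ay N D1 i j k) (Ay N D2 i j k) (Dy h N F1 i j k) (Dy h N F2 i j k) c C Hc H2 G2).
    unfold Rdiv in *. lra. }
  assert (Hz : - sum3 N (facez h N D1 D2 F1 F2) <= C ^ 2 / (4 * c) * sum3 N (fun i j k => Az N g i j k ^ 2)).
  { rewrite <- sum3_scal, <- sum3_opp.
    apply sum3_le; intros i j k Hi Hj Hk. destruct (HD i j k Hi Hj Hk) as [H1 [H2 H3]].
    destruct (HF i j k Hi Hj Hk) as [G1 [G2 G3]].
    unfold facez. replace (Az N g i j k) with (Az N D1 i j k - Az N D2 i j k) by (unfold Az, g, ext; field).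
    pose proof (face_bound (Az N D1 i j k) (Az N D2 i j k) (Dz h N F1 i j k) (Dz h N F2 i j k) c C Hc H3 G3).
    unfold Rdiv in *. lra. }
  pose proof (Ax_sq_sum N g HN). pose proof (Ay_sq_sum N g HN). pose proof (Az_sq_sum N g HN).
  assert (0 <= C ^ 2 / (4 * c)) by (unfold Rdiv; apply Rmult_le_pos; [apply pow2_ge_0|left; apply Rinv_0_lt_compat; lra]).
  change (sum3 N (fun i j k => (D1 i j k - D2 i j k) ^ 2)) with (sum3 N (fun i j k => g i j k ^ 2)).
  set (K := C ^ 2 / (4 * c)) in *.
  assert (K * sum3 N (fun i j k => Ax N g i j k ^ 2) <= K * (2 * sum3 N (fun i j k => g i j k ^ 2))) by (apply Rmult_le_compat_l; auto).
  assert (K * sum3 N (fun i j k => Ay N g i j k ^ 2) <= K * (2 * sum3 N (fun i j k => g i j k ^ 2))) by (apply Rmult_le_compat_l; auto).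
  assert (K * sum3 N (fun i j k => Az N g i j k ^ 2) <= K * (2 * sum3 N (fun i j k => g i j k ^ 2))) by (apply Rmult_le_compat_l; auto).
  lra. Qed.

Lemma lap_nonpos : forall h N (s : grid), 0 < h -> (1 <= N)%nat ->
  sum3 N (fun i j k => lap h N s i j k * s i j k) <= 0.
Proof. intros h N s Hh HN.
  set (one := fun (_ _ _ : nat) => 1). set (z := fun (_ _ _ : nat) => 0).
  rewrite (sum3_ext N _ (fun i j k => (divDgrad h N one s i j k - divDgrad h N one z i j k) * (s i j k - z i j k))).
  2:{ intros i j k _ _ _. unfold lap, divDgrad, one, z, dx, dy, dz, Ax, Ay, Az, Dx, Dy, Dz, ext. field; lra. }
  rewrite sbp_div; auto.
  assert (forall f : grid, on_cells N (fun i j k => 0 <= f i j k) -> 0 <= sum3 N f) by (intros; apply sum3_nonneg; auto).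
  assert (0 <= sum3 N (facex h N one one s z)).
  { apply H; intros i j k _ _ _; unfold facex, one, Ax, ext.
    replace (_ * _) with ((Dx h N s i j k - Dx h N z i j k) ^ 2) by field. apply pow2_ge_0. }
  assert (0 <= sum3 N (facey h N one one s z)).
  { apply H; intros i j k _ _ _; unfold facey, one, Ay, ext.
    replace (_ * _) with ((Dy h N s i j k - Dy h N z i j k) ^ 2) by field. apply pow2_ge_0. }
  assert (0 <= sum3 N (facez h N one one s z)).
  { apply H; intros i j k _ _ _; unfold facez, one, Az, ext.
    replace (_ * _) with ((Dz h N s i j k - Dz h N z i j k) ^ 2) by field. apply pow2_ge_0. }
  lra. Qed.


Definition dSh (r a : R) := (6*r^2 - 5*a*r + 2*a^2)/(6*r^3).

Lemma Sh_der : forall a r, 0 < r -> derivable_pt_lim (fun r => Sh r a) r (dSh r a).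
Proof. intros. apply is_derive_Reals. unfold Sh, dSh. auto_derive.
  repeat split; try lra; try nra. field. lra. Qed.

Lemma dSh_pos : forall r a, 0 < r -> 1 / (6 * r) <= dSh r a.
Proof. intros. unfold dSh.
  assert (0 < r^3) by (apply pow_lt; lra).
  apply Rmult_le_reg_r with (6 * r^3). lra.
  replace ((6 * r ^ 2 - 5 * a * r + 2 * a ^ 2) / (6 * r ^ 3) * (6 * r ^ 3)) with (6 * r ^ 2 - 5 * a * r + 2 * a ^ 2) by (field; lra).
  replace (1 / (6 * r) * (6 * r ^ 3)) with (r ^ 2) by (field; lra).
  assert (0 <= (r - a/2)^2) by apply pow2_ge_0. nra. Qed.

Lemma Sh_mvt : forall a y x, 0 < y -> y < x -> exists c, y < c < x /\ Sh x a - Sh y a = dSh c a * (x - y).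
Proof. intros. destruct (MVT_cor2 (fun r => Sh r a) (fun r => dSh r a) y x H0) as [c [Hc1 Hc2]].
  intros; apply Sh_der; lra. exists c; split; auto. Qed.

Lemma Sh_mono : forall a y x, 0 < y -> y <= x -> Sh y a <= Sh x a.
Proof. intros. destruct (Req_dec y x). subst; lra.
  destruct (Sh_mvt a y x) as [c [Hc E]]; auto. lra.
  pose proof (dSh_pos c a). assert (0 < 1/(6*c)) by (apply Rdiv_lt_0_compat; lra).
  assert (0 <= dSh c a * (x - y)) by (apply Rmult_le_pos; lra). lra. Qed.

Lemma dSh_bounds : forall e C r a, 0 < e -> e <= C -> e/2 <= r <= 2*C -> e/2 <= a <= 2*C ->
  1/(12*C) <= dSh r a <= 128 * C^2 / (3 * e^3).
Proof. intros. split.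
  - apply Rle_trans with (1/(6*r)). apply Rmult_le_compat_l. lra.
    apply Rinv_le_contravar; lra. apply dSh_pos; lra.
  - unfold dSh. assert (0 < r^3) by (apply pow_lt; lra).
    assert (e^3 <= 8 * r^3). { replace (8 * r^3) with ((2*r)^3) by ring. apply pow_incr; lra. }
    assert (0 < e^3) by (apply pow_lt; lra).
    apply Rmult_le_reg_r with (6 * r^3 * (3 * e^3)). apply Rmult_lt_0_compat; lra.
    replace ((6 * r ^ 2 - 5 * a * r + 2 * a ^ 2) / (6 * r ^ 3) * (6 * r ^ 3 * (3 * e ^ 3)))
      with ((6 * r ^ 2 - 5 * a * r + 2 * a ^ 2) * (3 * e^3)) by (field; lra).
    replace (128 * C ^ 2 / (3 * e ^ 3) * (6 * r ^ 3 * (3 * e ^ 3))) with (128 * C^2 * 6 * r^3) by (field; lra).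
    assert (r^2 <= (2*C)^2) by (apply pow_incr; lra). assert (a^2 <= (2*C)^2) by (apply pow_incr; lra).
    assert (0 <= a * r) by (apply Rmult_le_pos; lra).
    assert (6 * r ^ 2 - 5 * a * r + 2 * a ^ 2 <= 32 * C^2) by nra.
    assert (0 <= (r - 5*a/12)^2) by apply pow2_ge_0. assert (0 <= 6 * r ^ 2 - 5 * a * r + 2 * a ^ 2) by nra.
    assert ((6 * r ^ 2 - 5 * a * r + 2 * a ^ 2) * (3 * e^3) <= 32 * C^2 * (3 * e^3)) by (apply Rmult_le_compat_r; lra).
    nra. Qed.

Definition c1K (C : R) := 1/(12*C).
Definition L1K (e C : R) := 128 * C^2 / (3 * e^3).
Definition L2K (e C : R) := 28 * C / (3 * e^2).

Lemma Sh_diff_region : forall e C a x y, 0 < e -> e <= C -> e/2 <= x <= 2*C -> e/2 <= y <= 2*C -> e/2 <= a <= 2*C ->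
  c1K C * (x - y)^2 <= (Sh x a - Sh y a) * (x - y) /\ Rabs (Sh x a - Sh y a) <= L1K e C * Rabs (x - y).
Proof. intros.
  assert (Gen : forall x y, e/2 <= x <= 2*C -> e/2 <= y <= 2*C -> y < x ->
     c1K C * (x - y)^2 <= (Sh x a - Sh y a) * (x - y) /\ Rabs (Sh x a - Sh y a) <= L1K e C * Rabs (x - y)).
  { clear x y H1 H2. intros x y Hx Hy Hxy. destruct (Sh_mvt a y x) as [c [Hc E]]; try lra.
    destruct (dSh_bounds e C c a) as [B1 B2]; try lra. rewrite E. unfold c1K, L1K. split.
    - assert (0 <= (x-y)^2) by apply pow2_ge_0.
      replace (dSh c a * (x - y) * (x - y)) with (dSh c a * (x-y)^2) by ring.
      apply Rmult_le_compat_r; auto.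
    - rewrite Rabs_mult. rewrite (Rabs_right (dSh c a)). apply Rmult_le_compat_r. apply Rabs_pos. auto.
      apply Rle_ge. apply Rle_trans with (1/(12*C)); auto. unfold Rdiv; rewrite Rmult_1_l.
      left; apply Rinv_0_lt_compat; lra. }
  destruct (Rtotal_order x y) as [Hl|[He|Hg]].
  - destruct (Gen y x) as [G1 G2]; auto. split.
    + replace ((x-y)^2) with ((y-x)^2) by ring. replace ((Sh x a - Sh y a) * (x - y)) with ((Sh y a - Sh x a) * (y - x)) by ring. auto.
    + rewrite Rabs_minus_sym, (Rabs_minus_sym x). auto.
  - subst. replace (y - y) with 0 by ring. replace (Sh y a - Sh y a) with 0 by ring. rewrite Rabs_R0.
    split; [right; ring|]. rewrite Rmult_0_r; lra.
  - apply Gen; auto. Qed.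

Lemma Sh_cross : forall y a a', 0 < y -> Sh y a - Sh y a' = (a - a') * (5*y - a - a') / (6 * y^2).
Proof. intros. unfold Sh. field. lra. Qed.

Lemma Sh_cross_bound : forall e C y a a', 0 < e -> e <= C -> e/2 <= y <= 2*C -> e/2 <= a <= 2*C -> e/2 <= a' <= 2*C ->
  Rabs (Sh y a - Sh y a') <= L2K e C * Rabs (a - a').
Proof. intros. rewrite Sh_cross by lra. unfold Rdiv. rewrite !Rabs_mult.
  rewrite (Rabs_right (/ (6 * y^2))).
  2:{ apply Rle_ge; left; apply Rinv_0_lt_compat. assert (0 < y^2) by (apply pow_lt; lra). lra. }
  assert (Rabs (5 * y - a - a') <= 14 * C) by (apply Rabs_le; lra).
  assert (e^2 <= 4 * y^2) by (replace (4*y^2) with ((2*y)^2) by ring; apply pow_incr; lra).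
  assert (0 < e^2) by (apply pow_lt; lra).
  assert (/ (6 * y^2) <= 4 / (6 * e^2)).
  { apply Rmult_le_reg_r with (6*y^2 * (6 * e^2)). nra.
    replace (/ (6 * y ^ 2) * (6 * y ^ 2 * (6 * e ^ 2))) with (6 * e^2) by (field; nra).
    replace (4 / (6 * e ^ 2) * (6 * y ^ 2 * (6 * e ^ 2))) with (4 * 6 * y^2) by (field; nra). nra. }
  unfold L2K.
  assert (0 <= Rabs (a - a')) by apply Rabs_pos.
  assert (0 <= / (6 * y^2)) by (left; apply Rinv_0_lt_compat; nra).
  apply Rle_trans with (Rabs (a - a') * (14 * C) * (4 / (6 * e^2))).
  apply Rmult_le_compat; try apply Rmult_le_pos; auto; try apply Rabs_pos.
  apply Rmult_le_compat_l; auto.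
  right; field; lra. Qed.


Definition mK (u : R) := Rmin (u^2) (Rabs u).
Definition cK (e C : R) := c1K C * Rmin 1 (e/4).
Definition LK (e C : R) := L1K e C + L2K e C + c1K C.
Definition etaK (e C : R) := Rmin (e/2) (c1K C * e / (4 * L2K e C)).

Lemma Rabs_le_inv : forall x b, Rabs x <= b -> - b <= x <= b.
Proof. intros. pose proof (Rle_abs x). pose proof (Rle_abs (-x)). rewrite Rabs_Ropp in H1. lra. Qed.

Lemma prod_lb : forall s t B, Rabs t <= B -> - (Rabs s * B) <= s * t.
Proof. intros. assert (- Rabs (s * t) <= s * t) by (pose proof (Rle_abs (- (s*t))); rewrite Rabs_Ropp in H0; lra).
  rewrite Rabs_mult in H0. assert (Rabs s * Rabs t <= Rabs s * B) by (apply Rmult_le_compat_l; auto; apply Rabs_pos). lra. Qed.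

Lemma consts_pos : forall e C, 0 < e -> e <= C -> 0 < c1K C /\ 0 < L1K e C /\ 0 < L2K e C.
Proof. intros. unfold c1K, L1K, L2K.
  assert (0 < e^2) by (apply pow_lt; lra). assert (0 < e^3) by (apply pow_lt; lra).
  assert (0 < C^2) by (apply pow_lt; lra).
  repeat split; apply Rdiv_lt_0_compat; lra. Qed.

Lemma mK_le_abs : forall u, mK u <= Rabs u.
Proof. intros; unfold mK; apply Rmin_r. Qed.
Lemma mK_le_sq : forall u, mK u <= u^2.
Proof. intros; unfold mK; apply Rmin_l. Qed.
Lemma mK_nonneg : forall u, 0 <= mK u.
Proof. intros; unfold mK; apply Rmin_glb; [apply pow2_ge_0|apply Rabs_pos]. Qed.
Lemma sq_le_mK : forall u, u^2 <= mK u + mK u ^ 2.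
Proof. intros; unfold mK. destruct (Rle_dec (u^2) (Rabs u)).
  - rewrite Rmin_left; auto. assert (0 <= (u^2)^2) by apply pow2_ge_0. lra.
  - rewrite Rmin_right by lra. rewrite pow2_abs. pose proof (Rabs_pos u). lra. Qed.

Lemma key_pt : forall e C x a a' y q eta, 0 < e -> e <= C ->
  e <= x <= C -> e <= a <= C -> Rabs (a - a') <= eta -> Rabs q <= eta -> eta <= etaK e C -> 0 < y ->
  cK e C * mK (x - y) - LK e C * (Rabs q + Rabs (a - a')) * Rabs (x - y)
    - LK e C * (Rabs q + Rabs (a - a')) ^ 2 <= (x - y - q) * (Sh x a - Sh y a').
Proof. intros e C x a a' y q eta He HeC Hx Ha Hd Hq Heta Hy.
  destruct (consts_pos e C He HeC) as [Pc1 [PL1 PL2]].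
  assert (Heta1 : eta <= e/2) by (eapply Rle_trans; [apply Heta|apply Rmin_l]).
  assert (Heta2 : L2K e C * eta <= c1K C * e / 4).
  { assert (eta <= c1K C * e / (4 * L2K e C)) by (eapply Rle_trans; [apply Heta|apply Rmin_r]).
    apply Rmult_le_compat_l with (r := L2K e C) in H; [|lra].
    replace (L2K e C * (c1K C * e / (4 * L2K e C))) with (c1K C * e / 4) in H by (field; lra). auto. }
  assert (Ha' : e/2 <= a' <= 2*C) by (apply Rabs_le_inv in Hd; lra).
  assert (HcK1 : cK e C <= c1K C) by (unfold cK; pose proof (Rmin_l 1 (e/4)); nra).
  assert (HcK2 : cK e C <= c1K C * (e/4)) by (unfold cK; pose proof (Rmin_r 1 (e/4)); nra).
  assert (HcK0 : 0 <= cK e C) by (unfold cK; apply Rmult_le_pos; [lra|apply Rmin_glb; lra]).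
  set (d := a - a') in *. set (u := x - y).
  pose proof (Rabs_pos q) as Aq. pose proof (Rabs_pos d) as Ad. pose proof (Rabs_pos u) as Au.
  pose proof (mK_nonneg u) as M0. pose proof (mK_le_abs u) as M1. pose proof (mK_le_sq u) as M2.
  set (P := Rabs q + Rabs d).
  assert (LKe : LK e C = L1K e C + L2K e C + c1K C) by reflexivity.
  destruct (Rlt_le_dec y (e/2)) as [Yc|Y1]; [|destruct (Rle_lt_dec y (2*C)) as [Y2|Yb]].
  -
    assert (T1 : - (L2K e C * Rabs d) <= Sh x a - Sh x a').
    { pose proof (Sh_cross_bound e C x a a' He HeC ltac:(lra) ltac:(lra) Ha'). fold d in H.
      apply Rabs_le_inv in H. lra. }
    assert (T2 : c1K C * (e/2) <= Sh x a' - Sh (e/2) a').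
    { destruct (Sh_diff_region e C a' x (e/2)) as [H1 _]; try lra.
      assert (0 < x - e/2) by lra.
      assert (c1K C * (x - e/2) <= Sh x a' - Sh (e/2) a').
      { apply Rmult_le_reg_r with (x - e/2); [lra|]. replace (c1K C * (x - e / 2) * (x - e / 2)) with (c1K C * (x - e/2)^2) by ring. lra. }
      assert (c1K C * (e/2) <= c1K C * (x - e/2)) by (apply Rmult_le_compat_l; lra). lra. }
    assert (T3 : 0 <= Sh (e/2) a' - Sh y a') by (pose proof (Sh_mono a' y (e/2)); lra).
    assert (G : c1K C * e / 4 <= Sh x a - Sh y a').
    { assert (L2K e C * Rabs d <= L2K e C * eta) by (apply Rmult_le_compat_l; lra). lra. }
    assert (Hu : e/2 < u) by (unfold u; lra).
    rewrite (Rabs_right u) in * by lra.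
    assert (0 <= u - q) by (apply Rabs_le_inv in Hq; lra).
    assert ((u - q) * (c1K C * e / 4) <= (u - q) * (Sh x a - Sh y a')) by (apply Rmult_le_compat_l; auto).
    assert (- Rabs q <= q) by (pose proof (Rle_abs (-q)); rewrite Rabs_Ropp in H1; lra).
    assert (Rabs q * (e/2) <= Rabs q * u) by (apply Rmult_le_compat_l; lra).
    assert (cK e C * mK u <= c1K C * (e/4) * u) by (apply Rmult_le_compat; lra).
    assert (0 <= P * u) by (unfold P; nra).
    assert (0 <= P^2) by apply pow2_ge_0.
    assert (c1K C * (Rabs q * u) <= LK e C * (P * u)).
    { apply Rmult_le_compat; [lra| apply Rmult_le_pos; lra | rewrite LKe; lra | unfold P; apply Rmult_le_compat_r; lra]. }
    assert (0 <= LK e C * P^2) by (apply Rmult_le_pos; [rewrite LKe; lra|apply pow2_ge_0]).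
    replace (x - y - q) with (u - q) by (unfold u; ring).
    assert (F1 : c1K C * e / 4 * q <= c1K C * e / 4 * Rabs q) by (apply Rmult_le_compat_l; [|apply Rle_abs]; assert (0 < c1K C * e) by (apply Rmult_lt_0_compat; lra); lra).
    assert (F2 : c1K C * e / 4 * Rabs q <= c1K C * (Rabs q * u)).
    { replace (c1K C * e / 4 * Rabs q) with (c1K C / 2 * (Rabs q * (e/2))) by field.
      apply Rle_trans with (c1K C / 2 * (Rabs q * u)). apply Rmult_le_compat_l; lra.
      assert (0 <= Rabs q * u) by (apply Rmult_le_pos; lra). apply Rmult_le_compat_r; lra. }
    assert (F3 : (u - q) * (c1K C * e / 4) = c1K C * (e / 4) * u - c1K C * e / 4 * q) by field.
    lra.
  -
    destruct (Sh_diff_region e C a x y) as [D1a D1b]; try lra.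
    pose proof (Sh_cross_bound e C y a a' He HeC ltac:(lra) ltac:(lra) Ha') as D2. fold d in D2. fold u in D1a, D1b.
    set (D1 := Sh x a - Sh y a) in *. set (D2v := Sh y a - Sh y a') in *.
    replace (Sh x a - Sh y a') with (D1 + D2v) by (unfold D1, D2v; ring).
    replace (x - y - q) with (u - q) by (unfold u; ring).
    assert (E1 : - (Rabs u * (L2K e C * Rabs d)) <= u * D2v) by (apply prod_lb; auto).
    assert (E2 : - (Rabs q * (L1K e C * Rabs u)) <= q * D1) by (apply prod_lb; auto).
    assert (E2' : q * D1 <= Rabs q * (L1K e C * Rabs u)).
    { assert (- (Rabs (-q) * (L1K e C * Rabs u)) <= -q * D1) by (apply prod_lb; auto). rewrite Rabs_Ropp in H; lra. }
    assert (E3' : q * D2v <= Rabs q * (L2K e C * Rabs d)).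
    { assert (- (Rabs (-q) * (L2K e C * Rabs d)) <= -q * D2v) by (apply prod_lb; auto). rewrite Rabs_Ropp in H; lra. }
    assert (cK e C * mK u <= c1K C * u^2) by (apply Rmult_le_compat; lra).
    assert (L2K e C * (Rabs u * Rabs d) + L1K e C * (Rabs q * Rabs u) <= LK e C * (P * Rabs u)).
    { rewrite LKe; unfold P. assert (0 <= Rabs u * Rabs d) by nra. assert (0 <= Rabs q * Rabs u) by nra. nra. }
    assert (L2K e C * (Rabs q * Rabs d) <= LK e C * P^2).
    { rewrite LKe; unfold P. assert (0 <= Rabs q * Rabs d) by nra. nra. }
    nra.
  -
    assert (T1 : Sh x a - Sh x a' <= L2K e C * Rabs d).
    { pose proof (Sh_cross_bound e C x a a' He HeC ltac:(lra) ltac:(lra) Ha'). fold d in H.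
      apply Rabs_le_inv in H. lra. }
    assert (T2 : Sh x a' - Sh (2*C) a' <= - (c1K C * C)).
    { destruct (Sh_diff_region e C a' x (2*C)) as [H1 _]; try lra.
      assert (x - 2*C <= - C) by lra.
      assert (Sh x a' - Sh (2*C) a' <= c1K C * (x - 2*C)).
      { apply Rmult_le_reg_r with (2*C - x); [lra|].
        replace (c1K C * (x - 2*C) * (2*C - x)) with (- (c1K C * (x - 2*C)^2)) by ring.
        replace ((Sh x a' - Sh (2*C) a') * (2*C - x)) with (- ((Sh x a' - Sh (2 * C) a') * (x - 2 * C))) by ring. lra. }
      assert (c1K C * (x - 2*C) <= c1K C * (- C)) by (apply Rmult_le_compat_l; lra). lra. }
    assert (T3 : Sh (2*C) a' - Sh y a' <= 0) by (pose proof (Sh_mono a' (2*C) y); lra).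
    assert (G : Sh x a - Sh y a' <= - (c1K C * C / 2)).
    { assert (L2K e C * Rabs d <= L2K e C * eta) by (apply Rmult_le_compat_l; lra).
      assert (c1K C * e <= c1K C * C) by (apply Rmult_le_compat_l; lra). lra. }
    assert (Hu : u <= - C) by (unfold u; lra).
    rewrite (Rabs_left u) in * by lra.
    assert (Hq' : q <= Rabs q) by apply Rle_abs.
    assert (Hq'' : - Rabs q <= q) by (pose proof (Rle_abs (-q)); rewrite Rabs_Ropp in H; lra).
    assert (u - q <= 0) by lra.
    assert ((u - q) * (Sh x a - Sh y a') >= (u - q) * (- (c1K C * C / 2))).
    { apply Rle_ge. apply Rmult_le_compat_neg_l; auto. }
    assert (Rabs q * C <= Rabs q * (- u)) by (apply Rmult_le_compat_l; lra).
    assert (c1K C * (e/4) <= c1K C * (C/2)) by (apply Rmult_le_compat_l; lra).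
    assert (cK e C * mK u <= c1K C * (C/2) * (- u)) by (apply Rmult_le_compat; lra).
    assert (c1K C * (Rabs q * (-u)) <= LK e C * (P * (-u))).
    { apply Rmult_le_compat; [lra| apply Rmult_le_pos; lra | rewrite LKe; lra | unfold P; apply Rmult_le_compat_r; lra]. }
    assert (0 <= LK e C * P^2) by (apply Rmult_le_pos; [rewrite LKe; lra|apply pow2_ge_0]).
    replace (x - y - q) with (u - q) by (unfold u; ring).
    assert (F1 : c1K C * C / 2 * (- q) <= c1K C * C / 2 * Rabs q) by (apply Rmult_le_compat_l; [|lra]; assert (0 < c1K C * C) by (apply Rmult_lt_0_compat; lra); lra).
    assert (F2 : c1K C * C / 2 * Rabs q <= c1K C * (Rabs q * (-u))).
    { replace (c1K C * C / 2 * Rabs q) with (c1K C / 2 * (Rabs q * C)) by field.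
      apply Rle_trans with (c1K C / 2 * (Rabs q * (-u))). apply Rmult_le_compat_l; lra.
      assert (0 <= Rabs q * (-u)) by (apply Rmult_le_pos; lra). apply Rmult_le_compat_r; lra. }
    assert (F3 : (u - q) * (- (c1K C * C / 2)) = c1K C * (C/2) * (- u) + c1K C * C / 2 * q) by field.
    lra.
Qed.


Lemma phi_step : forall h N dt theta mu alpha chi (s f0 w tf : grid),
  0 < h -> (1 <= N)%nat -> 0 < dt -> 0 < theta -> 0 < mu -> 0 < alpha -> 0 < chi ->
  on_cells N (fun i j k => theta * (s i j k - 2 * f0 i j k) / dt =
     mu / 2 * lap h N s i j k - alpha / 2 * s i j k + chi / 2 * w i j k + tf i j k) ->
  norm2 h N s <= 2 * norm2 h N f0 + dt / theta * (chi / 2 * norm2 h N w + norm2 h N tf).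
Proof. intros h N dt theta mu alpha chi s f0 w tf Hh HN Hdt Hth Hmu Hal Hchi Heq.
  assert (H1 : sum3 N (fun i j k => theta / dt * (s i j k * s i j k)) <=
     sum3 N (fun i j k => (2 * theta / dt * (f0 i j k * s i j k) + chi / 2 * (w i j k * s i j k) + tf i j k * s i j k)
                          + mu / 2 * (lap h N s i j k * s i j k))).
  { apply sum3_le; intros i j k Hi Hj Hk. specialize (Heq i j k Hi Hj Hk).
    assert (E : theta / dt * (s i j k * s i j k) = 2 * theta / dt * (f0 i j k * s i j k) +
       (theta * (s i j k - 2 * f0 i j k) / dt) * s i j k) by (field; lra).
    rewrite E, Heq. assert (0 <= alpha / 2 * (s i j k * s i j k)) by (apply Rmult_le_pos; nra). nra. }
  rewrite sum3_plus, sum3_scal, (sum3_scal N (mu/2)) in H1.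
  pose proof (lap_nonpos h N s Hh HN).
  assert (H2 : theta / dt * ip h N s s <= 2 * theta / dt * ip h N f0 s + chi / 2 * ip h N w s + ip h N tf s).
  { unfold ip. rewrite !sum3_plus, !sum3_scal in H1.
    assert (0 <= mu / 2) by lra.
    assert (mu / 2 * sum3 N (fun i j k => lap h N s i j k * s i j k) <= 0) by nra.
    assert (0 < h ^ 3) by (apply pow_lt; lra).
    assert (h^3 * (theta / dt * sum3 N (fun i j k => s i j k * s i j k)) <=
      h^3 * (2 * theta / dt * sum3 N (fun i j k => f0 i j k * s i j k) + chi / 2 * sum3 N (fun i j k => w i j k * s i j k) +
             sum3 N (fun i j k => tf i j k * s i j k))) by (apply Rmult_le_compat_l; lra).
    nra. }
  rewrite <- norm2_sq in H2 by auto.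
  pose proof (ip_cs h N f0 s Hh). pose proof (ip_cs h N w s Hh). pose proof (ip_cs h N tf s Hh).
  set (S := norm2 h N s) in *. set (F := norm2 h N f0) in *. set (W := norm2 h N w) in *. set (T := norm2 h N tf) in *.
  assert (0 <= S) by apply norm2_nonneg. assert (0 <= F) by apply norm2_nonneg.
  assert (0 <= W) by apply norm2_nonneg. assert (0 <= T) by apply norm2_nonneg.
  assert (H3b : theta / dt * S ^ 2 <= S * (2 * theta / dt * F + chi / 2 * W + T)).
  { assert (0 <= 2 * theta / dt) by (apply Rmult_le_pos; [lra|left; apply Rinv_0_lt_compat; lra]).
    assert (2 * theta / dt * ip h N f0 s <= 2 * theta / dt * (F * S)) by (apply Rmult_le_compat_l; auto).
    assert (chi / 2 * ip h N w s <= chi / 2 * (W * S)) by (apply Rmult_le_compat_l; lra). nra. }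
  destruct (Req_dec S 0) as [HS|HS].
  - rewrite HS. assert (0 <= dt / theta) by (apply Rmult_le_pos; [lra|left; apply Rinv_0_lt_compat; lra]).
    assert (0 <= chi / 2 * W + T) by nra. nra.
  - assert (0 < S) by lra.
    assert (theta / dt * S <= 2 * theta / dt * F + chi / 2 * W + T).
    { apply Rmult_le_reg_l with S; auto. replace (S * (theta / dt * S)) with (theta / dt * S ^ 2) by ring. lra. }
    apply Rmult_le_reg_l with (theta / dt). apply Rdiv_lt_0_compat; lra.
    replace (theta / dt * (2 * F + dt / theta * (chi / 2 * W + T))) with (2 * theta / dt * F + chi / 2 * W + T) by (field; lra).
    auto.
Qed.


Lemma cl_range : forall N i, (1 <= N)%nat -> (1 <= cl N i <= N)%nat.
Proof. intros; unfold cl; lia. Qed.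

Lemma ext_ge : forall N f c, (1 <= N)%nat -> on_cells N (fun i j k => c <= f i j k) ->
  forall i j k, c <= ext N f i j k.
Proof. intros. unfold ext. apply H0; apply cl_range; auto. Qed.

Lemma rho_flux : forall h N dt c C (e q b Vc rh V : grid),
  0 < h -> (1 <= N)%nat -> 0 < dt -> 0 < c ->
  on_cells N (fun i j k => e i j k - q i j k = dt * (divDgrad h N b Vc i j k - divDgrad h N rh V i j k)) ->
  on_cells N (fun i j k => c <= rh i j k) ->
  on_cells N (fun i j k => Rabs (Dx h N Vc i j k) <= C /\ Rabs (Dy h N Vc i j k) <= C /\ Rabs (Dz h N Vc i j k) <= C) ->
  ip h N (fun i j k => e i j k - q i j k) (fun i j k => Vc i j k - V i j k) <=
  dt * (6 * (C ^ 2 / (4 * c))) * (h ^ 3 * sum3 N (fun i j k => (b i j k - rh i j k) ^ 2)).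
Proof. intros h N dt c C e q b Vc rh V Hh HN Hdt Hc Heq Hrh HV.
  unfold ip. rewrite (sum3_ext N _ (fun i j k => dt * ((divDgrad h N b Vc i j k - divDgrad h N rh V i j k) * (Vc i j k - V i j k)))).
  2:{ intros i j k Hi Hj Hk; rewrite (Heq i j k Hi Hj Hk); ring. }
  rewrite sum3_scal.
  pose proof (flux_bound h N b rh Vc V c C Hh HN Hc) as FB.
  assert (HA : on_cells N (fun i j k => c <= Ax N rh i j k /\ c <= Ay N rh i j k /\ c <= Az N rh i j k)).
  { intros i j k _ _ _. pose proof (ext_ge N rh c HN Hrh) as X.
    unfold Ax, Ay, Az. repeat split.
    - pose proof (X (S i) j k); pose proof (X i j k); lra.
    - pose proof (X i (S j) k); pose proof (X i j k); lra.
    - pose proof (X i j (S k)); pose proof (X i j k); lra. }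
  specialize (FB HA HV).
  assert (0 < h^3) by (apply pow_lt; lra).
  assert (h ^ 3 * (dt * sum3 N (fun i j k => (divDgrad h N b Vc i j k - divDgrad h N rh V i j k) * (Vc i j k - V i j k)))
    <= h^3 * (dt * (6 * (C ^ 2 / (4 * c)) * sum3 N (fun i j k => (b i j k - rh i j k) ^ 2)))).
  { apply Rmult_le_compat_l; [lra|]. apply Rmult_le_compat_l; lra. }
  lra. Qed.


Lemma coerc_sum : forall h N cc LL (e q P G : grid), 0 < h -> 0 <= LL ->
  on_cells N (fun i j k => 0 <= P i j k) ->
  on_cells N (fun i j k => cc * mK (e i j k) - LL * P i j k * Rabs (e i j k) - LL * P i j k ^ 2
      <= (e i j k - q i j k) * G i j k) ->
  cc * (h ^ 3 * sum3 N (fun i j k => mK (e i j k))) - LL * norm2 h N P * norm2 h N e - LL * norm2 h N P ^ 2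
   <= ip h N (fun i j k => e i j k - q i j k) G.
Proof. intros h N cc LL e q P G Hh HL HP Hpt.
  assert (S1 : h^3 * sum3 N (fun i j k => cc * mK (e i j k) - LL * (P i j k * Rabs (e i j k)) - LL * (P i j k * P i j k))
     <= ip h N (fun i j k => e i j k - q i j k) G).
  { unfold ip. apply Rmult_le_compat_l. apply pow_le; lra. apply sum3_le; intros i j k Hi Hj Hk.
    specialize (Hpt i j k Hi Hj Hk). simpl in Hpt |- *. lra. }
  rewrite !sum3_minus, !sum3_scal in S1.
  assert (I1 : h^3 * sum3 N (fun i j k => P i j k * Rabs (e i j k)) <= norm2 h N P * norm2 h N e).
  { rewrite <- (norm2_abs h N e). apply (ip_cs h N P (fun i j k => Rabs (e i j k))); auto. }
  assert (I2 : h^3 * sum3 N (fun i j k => P i j k * P i j k) = norm2 h N P ^ 2).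
  { rewrite norm2_sq; auto. }
  assert (LL * (h^3 * sum3 N (fun i j k => P i j k * Rabs (e i j k))) <= LL * (norm2 h N P * norm2 h N e))
    by (apply Rmult_le_compat_l; auto).
  nra. Qed.

Lemma E_from_M : forall h N (e : grid), 0 < h ->
  norm2 h N e ^ 2 <= h ^ 3 * sum3 N (fun i j k => mK (e i j k)) +
     (h ^ 3 * sum3 N (fun i j k => mK (e i j k))) ^ 2 / h ^ 3.
Proof. intros h N e Hh. set (M := h ^ 3 * sum3 N (fun i j k => mK (e i j k))).
  assert (Hh3 : 0 < h^3) by (apply pow_lt; lra).
  assert (Hm : forall i j k, (1 <= i <= N)%nat -> (1 <= j <= N)%nat -> (1 <= k <= N)%nat ->
      h^3 * mK (e i j k) <= M).
  { intros. unfold M. apply Rmult_le_compat_l; [lra|].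
    apply (sum3_ge_term N (fun i j k => mK (e i j k))); auto. intros a b c _ _ _; apply mK_nonneg. }
  rewrite norm2_sq by auto. unfold ip.
  apply Rle_trans with (h^3 * sum3 N (fun i j k => mK (e i j k) + mK (e i j k) ^ 2)).
  { apply Rmult_le_compat_l; [lra|]. apply sum3_le; intros i j k _ _ _. pose proof (sq_le_mK (e i j k)). simpl in *; lra. }
  rewrite sum3_plus, Rmult_plus_distr_l. fold M. apply Rplus_le_compat_l.
  apply Rle_trans with (h^3 * sum3 N (fun i j k => (M / h^3) * mK (e i j k))).
  { apply Rmult_le_compat_l; [lra|]. apply sum3_le; intros i j k Hi Hj Hk.
    pose proof (Hm i j k Hi Hj Hk). pose proof (mK_nonneg (e i j k)).
    assert (mK (e i j k) <= M / h^3).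
    { apply Rmult_le_reg_l with (h^3); auto. replace (h^3 * (M / h^3)) with M by (field; lra). auto. }
    replace (mK (e i j k) ^ 2) with (mK (e i j k) * mK (e i j k)) by ring.
    apply Rmult_le_compat_r; auto. }
  rewrite sum3_scal. unfold M. right. field. lra. Qed.


Lemma pow_le_1_compat : forall x n, 0 <= x <= 1 -> x ^ n <= 1.
Proof. intros. rewrite <- (pow1 n). apply pow_incr; lra. Qed.

Lemma alg2 : forall h z g E M A1 A0,
  0 < h -> h <= 1 -> 0 < z -> z ^ 2 = h ^ 7 -> 0 < g -> 0 <= E -> 0 <= M -> 0 <= A1 -> 0 <= A0 ->
  g * M <= A1 * z * E + A0 * z ^ 2 ->
  E ^ 2 <= M + M ^ 2 / h ^ 3 ->
  8 * (A1 / g) ^ 2 * h <= 1 ->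
  2 * ((A1 / g) ^ 2 + A0 / g + 2 * (A0 / g) ^ 2) * h <= 1 ->
  E <= h ^ 3.
Proof. intros h z g E M A1 A0 Hh Hh1 Hz Hz2 Hg HE HM HA1 HA0 HgM HEM C1 C2.
  set (a1 := A1 / g) in *. set (a0 := A0 / g) in *.
  assert (Ha1 : 0 <= a1) by (unfold a1; apply Rmult_le_pos; [lra|left; apply Rinv_0_lt_compat; lra]).
  assert (Ha0 : 0 <= a0) by (unfold a0; apply Rmult_le_pos; [lra|left; apply Rinv_0_lt_compat; lra]).
  assert (HM1 : M <= a1 * z * E + a0 * z ^ 2).
  { apply Rmult_le_reg_l with g; auto. unfold a1, a0.
    replace (g * (A1 / g * z * E + A0 / g * z ^ 2)) with (A1 * z * E + A0 * z ^ 2) by (field; lra). auto. }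
  assert (HM2 : M <= E ^ 2 / 4 + (a1 ^ 2 + a0) * z ^ 2).
  { assert (0 <= (E / 2 - a1 * z) ^ 2) by apply pow2_ge_0. nra. }
  assert (HM3 : M ^ 2 <= 2 * a1 ^ 2 * z ^ 2 * E ^ 2 + 2 * a0 ^ 2 * z ^ 4).
  { assert (0 <= a1 * z * E) by (apply Rmult_le_pos; [apply Rmult_le_pos|]; lra).
    assert (M ^ 2 <= (a1 * z * E + a0 * z ^ 2) ^ 2) by (apply pow_incr; lra).
    assert (0 <= (a1 * z * E - a0 * z ^ 2) ^ 2) by apply pow2_ge_0. nra. }
  assert (Hh3 : 0 < h ^ 3) by (apply pow_lt; lra).
  assert (Hz4 : z ^ 4 = h ^ 14) by (replace (z^4) with ((z^2)^2) by ring; rewrite Hz2; ring).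
  assert (HM4 : M ^ 2 / h ^ 3 <= 2 * a1 ^ 2 * h * E ^ 2 + 2 * a0 ^ 2 * z ^ 2).
  { apply Rmult_le_reg_r with (h ^ 3); auto.
    replace (M ^ 2 / h ^ 3 * h ^ 3) with (M ^ 2) by (field; lra).
    rewrite Hz2. rewrite Hz2, Hz4 in HM3.
    assert (h ^ 11 <= h ^ 7).
    { replace (h^11) with (h^7 * h^4) by ring. assert (h^4 <= 1) by (apply pow_le_1_compat; split; lra).
      assert (0 < h^7) by (apply pow_lt; lra). nra. }
    assert (0 <= a1 ^ 2 * E ^ 2) by (apply Rmult_le_pos; apply pow2_ge_0).
    assert (0 <= a0 ^ 2) by apply pow2_ge_0.
    assert (a1 ^ 2 * E ^ 2 * h ^ 7 <= a1 ^ 2 * E ^ 2 * h ^ 4).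
    { apply Rmult_le_compat_l; auto. replace (h^7) with (h^4 * h^3) by ring.
      assert (h ^ 3 <= 1) by (apply pow_le_1_compat; split; lra). assert (0 < h^4) by (apply pow_lt; lra). nra. }
    assert (a0 ^ 2 * h ^ 14 <= a0 ^ 2 * (h ^ 7 * h ^ 3)).
    { apply Rmult_le_compat_l; auto. replace (h^14) with (h^11 * h^3) by ring. apply Rmult_le_compat_r; lra. }
    nra. }
  assert (HE2 : E ^ 2 <= 2 * ((a1 ^ 2 + a0 + 2 * a0 ^ 2) * z ^ 2)).
  { assert (2 * a1 ^ 2 * h * E ^ 2 <= E ^ 2 / 4).
    { assert (0 <= E^2) by apply pow2_ge_0. nra. }
    nra. }
  rewrite Hz2 in HE2.
  assert (E ^ 2 <= (h ^ 3) ^ 2).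
  { replace ((h^3)^2) with (h^6) by ring. apply Rle_trans with (2 * (a1 ^ 2 + a0 + 2 * a0 ^ 2) * h * h ^ 6).
    replace (2 * (a1 ^ 2 + a0 + 2 * a0 ^ 2) * h * h ^ 6) with (2 * ((a1 ^ 2 + a0 + 2 * a0 ^ 2) * h ^ 7)) by ring. lra.
    assert (0 < h^6) by (apply pow_lt; lra).
    assert (0 <= (1 - 2 * (a1 ^ 2 + a0 + 2 * a0 ^ 2) * h) * h^6) by (apply Rmult_le_pos; lra). nra. }
  rewrite <- !Rsqr_pow2 in H. apply Rsqr_incr_0_var; auto. lra.
Qed.

Lemma mul_le2 : forall a a' c c', 0 <= a <= a' -> 0 <= c <= c' -> a * c <= a' * c'.
Proof. intros. apply Rmult_le_compat; lra. Qed.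

Lemma alg1 : forall gam cc LLK chi theta dt E M Rr0 F0 Q PP T1 S IG IW Is Ie Xb K KX Kk Kc z,
  0 < gam -> 0 < cc -> 0 <= LLK -> 0 < chi -> 0 < theta -> 0 < dt ->
  0 <= E -> 0 <= M -> 0 <= Rr0 -> 0 <= F0 -> 0 <= Q -> 0 <= PP -> 0 <= T1 -> 0 <= S ->
  S <= 2 * F0 + dt / theta * (chi / 2 * (E + Rr0) + T1) ->
  gam * IG = IW + chi / 2 * Is - chi ^ 2 * dt / (4 * theta) * Ie ->
  IW <= Xb -> Is <= (E + Q) * S -> E ^ 2 - E * Rr0 - Q * E - Q * Rr0 <= Ie ->
  cc * M - LLK * PP * E - LLK * PP ^ 2 <= IG ->
  0 < z -> 0 <= K -> PP <= K * z -> F0 <= K * z -> Rr0 <= K * z -> Q <= K * z -> T1 <= K * z ->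
  Xb <= KX * z ^ 2 -> chi ^ 2 * dt / (4 * theta) <= Kk -> chi * dt / (2 * theta) <= Kc ->
  gam * cc * M <= (gam * LLK * K + chi * K + 4 * Kk * K + Kc * K) * z * E
     + (gam * LLK * K ^ 2 + KX + chi * K ^ 2 + 2 * Kk * K ^ 2 + Kc * K ^ 2) * z ^ 2.
Proof. intros. set (kap := chi ^ 2 * dt / (4 * theta)) in *. set (cp := chi * dt / (2 * theta)) in *.
  assert (Hkap : 0 <= kap) by (unfold kap; apply Rmult_le_pos; [nra|left; apply Rinv_0_lt_compat; lra]).
  assert (Hcp : 0 <= cp) by (unfold cp; apply Rmult_le_pos; [nra|left; apply Rinv_0_lt_compat; lra]).
  assert (S1 : gam * cc * M <= gam * IG + gam * LLK * PP * E + gam * LLK * PP ^ 2).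
  { assert (gam * (cc * M - LLK * PP * E - LLK * PP ^ 2) <= gam * IG) by (apply Rmult_le_compat_l; lra). nra. }
  assert (S2 : chi / 2 * Is <= chi / 2 * ((E + Q) * S)) by (apply Rmult_le_compat_l; lra).
  assert (S3 : (E + Q) * S <= (E + Q) * (2 * F0 + dt / theta * (chi / 2 * (E + Rr0) + T1))) by (apply Rmult_le_compat_l; lra).
  assert (S4 : chi / 2 * ((E + Q) * (2 * F0 + dt / theta * (chi / 2 * (E + Rr0) + T1))) =
     chi * (E + Q) * F0 + kap * (E + Q) * (E + Rr0) + cp * (E + Q) * T1) by (unfold kap, cp; field; lra).
  assert (S5 : kap * (E ^ 2 - E * Rr0 - Q * E - Q * Rr0) <= kap * Ie) by (apply Rmult_le_compat_l; auto).
  assert (S6 : gam * cc * M <= gam * LLK * PP * E + gam * LLK * PP ^ 2 + Xb + chi * (E + Q) * F0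
     + kap * (2 * (E * Rr0) + 2 * (Q * E) + 2 * (Q * Rr0)) + cp * (E + Q) * T1).
  { assert (chi / 2 * ((E + Q) * S) <= chi / 2 * ((E + Q) * (2 * F0 + dt / theta * (chi / 2 * (E + Rr0) + T1))))
      by (apply Rmult_le_compat_l; lra).
    nra. }
  assert (B1 : gam * LLK * PP * E <= gam * LLK * (K * z) * E).
  { apply Rmult_le_compat_r; auto. apply Rmult_le_compat_l; auto. apply Rmult_le_pos; lra. }
  assert (B2 : gam * LLK * PP ^ 2 <= gam * LLK * (K * z) ^ 2).
  { apply Rmult_le_compat_l. apply Rmult_le_pos; lra. apply pow_incr; lra. }
  assert (B3 : chi * (E + Q) * F0 <= chi * (E + K * z) * (K * z)).
  { apply Rmult_le_compat; try lra. apply Rmult_le_pos; lra. apply Rmult_le_compat_l; lra. }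
  assert (B4 : kap * (2 * (E * Rr0) + 2 * (Q * E) + 2 * (Q * Rr0)) <= Kk * (2 * (E * (K * z)) + 2 * ((K * z) * E) + 2 * ((K*z) * (K*z)))).
  { apply Rmult_le_compat; auto.
    assert (0 <= E * Rr0) by (apply Rmult_le_pos; lra). assert (0 <= Q * E) by (apply Rmult_le_pos; lra).
    assert (0 <= Q * Rr0) by (apply Rmult_le_pos; lra). lra.
    assert (E * Rr0 <= E * (K * z)) by (apply Rmult_le_compat_l; lra).
    assert (Q * E <= (K * z) * E) by (apply Rmult_le_compat_r; lra).
    assert (Q * Rr0 <= (K * z) * (K * z)) by (apply Rmult_le_compat; lra). lra. }
  assert (B5 : cp * (E + Q) * T1 <= Kc * (E + K * z) * (K * z)).
  { apply Rmult_le_compat; try lra. apply Rmult_le_pos; lra. apply Rmult_le_compat; lra. }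
  assert (0 <= K * z) by (apply Rmult_le_pos; lra).
  apply Rle_trans with (gam * LLK * (K * z) * E + gam * LLK * (K * z) ^ 2 + KX * z ^ 2 + chi * (E + K * z) * (K * z)
     + Kk * (2 * (E * (K * z)) + 2 * ((K * z) * E) + 2 * ((K*z) * (K*z))) + Kc * (E + K * z) * (K * z)).
  lra. right. ring.
Qed.


Lemma sqrt_ge_self : forall h, 0 <= h <= 1 -> h <= sqrt h.
Proof. intros. assert (0 <= sqrt h) by apply sqrt_pos. assert (sqrt h * sqrt h = h) by (apply sqrt_sqrt; lra).
  assert (sqrt h <= 1). { rewrite <- sqrt_1. apply sqrt_le_1_alt; lra. } nra. Qed.

Lemma Rpower_h : forall h, 0 < h <= 1 -> Rpower h (15/4) <= h ^ 3 * sqrt h.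
Proof. intros. replace (15/4) with (INR 3 + 3/4) by (simpl; lra).
  rewrite Rpower_plus, Rpower_pow by lra. apply Rmult_le_compat_l. apply pow_le; lra.
  rewrite <- Rpower_sqrt by lra. unfold Rpower.
  assert (ln h <= 0).
  { destruct (Rle_lt_or_eq_dec h 1) as [Hl|He]; try lra.
    rewrite <- ln_1. left. apply ln_increasing; lra. rewrite He, ln_1; lra. }
  destruct (Rle_lt_or_eq_dec _ _ H0) as [Hl|He].
  - left. apply exp_increasing. nra.
  - rewrite He. right. f_equal; ring. Qed.

Lemma delta_bound : forall h dt lam2, 0 < h <= 1 -> 0 < dt -> 0 < lam2 -> dt <= lam2 * h ->
  Rpower dt (15/4) + Rpower h (15/4) <= (Rpower lam2 (15/4) + 1) * (h ^ 3 * sqrt h).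
Proof. intros. pose proof (Rpower_h h H).
  assert (Rpower dt (15/4) <= Rpower lam2 (15/4) * Rpower h (15/4)).
  { rewrite Rpower_mult_distr by lra. apply Rle_Rpower_l; lra. }
  assert (0 < Rpower lam2 (15/4)) by (unfold Rpower; apply exp_pos).
  assert (Rpower lam2 (15/4) * Rpower h (15/4) <= Rpower lam2 (15/4) * (h ^ 3 * sqrt h)) by (apply Rmult_le_compat_l; lra).
  lra. Qed.

Lemma tau_bound : forall h dt lam2 Ct, 0 < h <= 1 -> 0 < dt -> 0 < lam2 -> 0 < Ct -> dt <= lam2 * h ->
  Ct * (dt ^ 4 + h ^ 4) <= Ct * (lam2 ^ 4 + 1) * (h ^ 3 * sqrt h).
Proof. intros. assert (dt ^ 4 <= (lam2 * h) ^ 4) by (apply pow_incr; lra).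
  assert (h <= sqrt h) by (apply sqrt_ge_self; lra).
  assert (0 < h ^ 3) by (apply pow_lt; lra).
  assert (h ^ 4 <= h ^ 3 * sqrt h) by (replace (h^4) with (h^3 * h) by ring; apply Rmult_le_compat_l; lra).
  assert (0 < lam2 ^ 4) by (apply pow_lt; lra).
  replace ((lam2 * h) ^ 4) with (lam2 ^ 4 * h ^ 4) in H4 by ring.
  assert (lam2 ^ 4 * h ^ 4 <= lam2 ^ 4 * (h ^ 3 * sqrt h)) by (apply Rmult_le_compat_l; lra).
  replace (Ct * (lam2 ^ 4 + 1) * (h ^ 3 * sqrt h)) with (Ct * (lam2 ^ 4 * (h ^ 3 * sqrt h) + h ^ 3 * sqrt h)) by ring.
  apply Rmult_le_compat_l; lra. Qed.

Lemma pt_small : forall h X K, 0 < h -> 0 <= K -> X <= K * (h ^ 3 * sqrt h) -> X / (h * sqrt h) <= K * h ^ 2.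
Proof. intros. assert (0 < sqrt h) by (apply sqrt_lt_R0; lra).
  assert (0 < h * sqrt h) by (apply Rmult_lt_0_compat; lra).
  apply Rmult_le_reg_r with (h * sqrt h); auto. replace (X / (h * sqrt h) * (h * sqrt h)) with X by (field; lra).
  replace (K * h ^ 2 * (h * sqrt h)) with (K * (h ^ 3 * sqrt h)) by ring. auto. Qed.

Lemma z_sq : forall h, 0 <= h -> (h ^ 3 * sqrt h) ^ 2 = h ^ 7.
Proof. intros. replace ((h ^ 3 * sqrt h) ^ 2) with (h ^ 6 * (sqrt h * sqrt h)) by ring. rewrite sqrt_sqrt by lra. ring. Qed.


Lemma max1_nonneg : forall m f, 0 <= max1 m f.
Proof. induction m; intros; simpl; [lra|]. pose proof (IHm f). pose proof (Rmax_l (max1 m f) (f (S m))). lra. Qed.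

Lemma max1_ge : forall m f i, (1 <= i <= m)%nat -> f i <= max1 m f.
Proof. induction m; intros f i Hi; [lia|]. simpl. destruct (Nat.eq_dec i (S m)).
  - subst. apply Rmax_r.
  - eapply Rle_trans; [apply IHm; lia|apply Rmax_l]. Qed.

Lemma max0_ge : forall m f i, (i <= m)%nat -> f i <= max0 m f.
Proof. intros. unfold max0. destruct i. apply Rmax_l.
  eapply Rle_trans; [apply (max1_ge m f (S i)); lia|apply Rmax_r]. Qed.

Lemma norminf_pt : forall N f i j k, (1 <= i <= N)%nat -> (1 <= j <= N)%nat -> (1 <= k <= N)%nat ->
  Rabs (f i j k) <= norminf N f.
Proof. intros. unfold norminf.
  eapply Rle_trans; [|apply (max1_ge N (fun i => max1 N (fun j => max1 N (fun k => Rabs (f i j k)))) i H)].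
  eapply Rle_trans; [|apply (max1_ge N (fun j => max1 N (fun k => Rabs (f i j k))) j H0)].
  apply (max1_ge N (fun k => Rabs (f i j k)) k H1). Qed.

Lemma norminf_nonneg : forall N f, 0 <= norminf N f.
Proof. intros; unfold norminf; apply max1_nonneg. Qed.

Lemma gradinf_pt : forall h N f i j k, (1 <= i <= N)%nat -> (1 <= j <= N)%nat -> (1 <= k <= N)%nat ->
  Rabs (Dx h N f i j k) <= gradinf h N f /\ Rabs (Dy h N f i j k) <= gradinf h N f /\ Rabs (Dz h N f i j k) <= gradinf h N f.
Proof. intros. unfold gradinf. repeat split.
  - eapply Rle_trans; [|eapply Rle_trans; [apply Rmax_l|apply Rmax_l]].
    eapply Rle_trans; [|apply (max0_ge N (fun i => max1 N (fun j => max1 N (fun k => Rabs (Dx h N f i j k)))) i); lia].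
    eapply Rle_trans; [|apply (max1_ge N (fun j => max1 N (fun k => Rabs (Dx h N f i j k))) j H0)].
    apply (max1_ge N (fun k => Rabs (Dx h N f i j k)) k H1).
  - eapply Rle_trans; [|eapply Rle_trans; [apply Rmax_r|apply Rmax_l]].
    eapply Rle_trans; [|apply (max1_ge N (fun i => max0 N (fun j => max1 N (fun k => Rabs (Dy h N f i j k)))) i H)].
    eapply Rle_trans; [|apply (max0_ge N (fun j => max1 N (fun k => Rabs (Dy h N f i j k))) j); lia].
    apply (max1_ge N (fun k => Rabs (Dy h N f i j k)) k H1).
  - eapply Rle_trans; [|apply Rmax_r].
    eapply Rle_trans; [|apply (max1_ge N (fun i => max1 N (fun j => max0 N (fun k => Rabs (Dz h N f i j k)))) i H)].
    eapply Rle_trans; [|apply (max1_ge N (fun j => max0 N (fun k => Rabs (Dz h N f i j k))) j H0)].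
    apply (max0_ge N (fun k => Rabs (Dz h N f i j k)) k); lia.
Qed.


Lemma sqrt_ge_x : forall x d, 0 <= d -> x <= sqrt (x ^ 2 + d).
Proof. intros. destruct (Rle_dec x 0). pose proof (sqrt_pos (x^2 + d)); lra.
  rewrite <- (sqrt_pow2 x) at 1 by lra. apply sqrt_le_1_alt. lra. Qed.

Lemma rh_close : forall bb x d, 0 <= bb -> 0 <= d ->
  (bb - sqrt (x ^ 2 + d ^ 2)) ^ 2 <= 2 * (bb - x) ^ 2 + 2 * d ^ 2.
Proof. intros.
  set (r := sqrt (x ^ 2 + d ^ 2)).
  assert (H1 : Rabs x <= r).
  { unfold r. rewrite <- (sqrt_pow2 (Rabs x)) by apply Rabs_pos. apply sqrt_le_1_alt.
    rewrite pow2_abs. pose proof (pow2_ge_0 d). lra. }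
  assert (H2 : r <= Rabs x + d).
  { unfold r. rewrite <- (sqrt_pow2 (Rabs x + d)) by (pose proof (Rabs_pos x); lra). apply sqrt_le_1_alt.
    assert (x^2 = Rabs x ^ 2) by (rewrite pow2_abs; auto). pose proof (Rabs_pos x). nra. }
  assert (H3 : Rabs (Rabs x - bb) <= Rabs (x - bb)).
  { rewrite <- (Rabs_right bb) at 1 by lra. apply Rabs_triang_inv2. }
  assert (H4 : Rabs (bb - r) <= Rabs (bb - x) + d).
  { replace (bb - r) with ((bb - Rabs x) + (Rabs x - r)) by ring.
    eapply Rle_trans; [apply Rabs_triang|].
    rewrite (Rabs_minus_sym bb (Rabs x)), (Rabs_minus_sym bb x), (Rabs_left1 (Rabs x - r)) by lra. lra. }
  assert (H5 : (bb - r) ^ 2 <= (Rabs (bb - x) + d) ^ 2).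
  { rewrite <- (pow2_abs (bb - r)). apply pow_incr. split; [apply Rabs_pos|auto]. }
  assert (0 <= (Rabs (bb - x) - d) ^ 2) by apply pow2_ge_0.
  rewrite <- (pow2_abs (bb - x)). nra. Qed.

Lemma lap_minus : forall h N (f1 f0 g1 g0 : grid), h <> 0 -> forall i j k,
  lap h N (fun i j k => f1 i j k + f0 i j k) i j k - lap h N (fun i j k => g1 i j k + g0 i j k) i j k =
  lap h N (fun i j k => (f1 i j k - g1 i j k) + (f0 i j k - g0 i j k)) i j k.
Proof. intros. unfold lap, dx, dy, dz, Dx, Dy, Dz, ext. field; auto. Qed.

Lemma small_h : forall X h, 0 <= X -> 0 < h -> h <= 1 / (X + 1) -> X * h <= 1.
Proof. intros. apply Rmult_le_compat_l with (r := X + 1) in H1; [|lra].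
  replace ((X + 1) * (1 / (X + 1))) with 1 in H1 by (field; lra). nra. Qed.

Lemma small_h' : forall X Y h, 0 <= X -> 0 < Y -> 0 < h -> h <= Y / (X + 1) -> X * h <= Y.
Proof. intros. apply Rmult_le_compat_l with (r := X + 1) in H2; [|lra].
  replace ((X + 1) * (Y / (X + 1))) with Y in H2 by (field; lra). nra. Qed.


Theorem mainTheorem8 :
  forall (a b gamma mu alpha chi theta epsS CS Ctau lam1 lam2 : R),
    a < b -> 0 < gamma -> 0 < mu -> 0 < alpha -> 0 < chi -> 0 < theta ->
    0 < epsS -> 0 < CS -> 0 < Ctau -> 0 < lam1 -> 0 < lam2 ->
  exists dt0 h0 : R, 0 < dt0 /\ 0 < h0 /\
  forall (N : nat) (dt : R), (1 <= N)%nat ->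
  let h := (b - a) / INR N in
    0 < dt -> dt <= dt0 -> h <= h0 ->
    lam1 * h <= dt -> dt <= lam2 * h ->
  forall (n : nat) (rho phi rc pc : nat -> grid) (taur tauf : grid),
    (2 <= n)%nat ->
    (* numerical solution at step n, with rho^{n+1} > 0 *)
    scheme_step gamma mu alpha chi theta dt h N rho phi n ->
    on_cells N (fun i j k => 0 < rho (S n) i j k) ->
    (* (i) perturbed scheme and truncation errors *)
    perturbed_step gamma mu alpha chi theta dt h N rc pc taur tauf n ->
    norm2 h N taur <= Ctau * (dt ^ 4 + h ^ 4) ->
    norm2 h N tauf <= Ctau * (dt ^ 4 + h ^ 4) ->
    mean a b h N taur = 0 ->
    (* (ii) mass *)
    (forall m, (n - 2 <= m <= S n)%nat -> mean a b h N (rc m) = mean a b h N (rho m)) ->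
    (* (iii) *)
    (forall m, (n - 2 <= m <= S n)%nat ->
       on_cells N (fun i j k => epsS <= rc m i j k <= CS) /\
       gradinf h N (rc m) <= CS) ->
    (forall m, (n - 1 <= m <= S n)%nat ->
       norminf N (gsub (rc m) (rc (pred m))) <= CS * dt /\
       gradinf h N (gsub (rc m) (rc (pred m))) <= CS * dt) ->
    (* (iv) *)
    (let V := potential gamma chi theta dt (rc (S n)) (rc n) (pc (S n)) (pc n) in
     norminf N V + gradinf h N V <= CS) ->
    (* a priori bounds *)
    (forall m, (n - 2 <= m <= n)%nat ->
       norm2 h N (gsub (rc m) (rho m)) <= Rpower dt (15/4) + Rpower h (15/4) /\
       norm2 h N (gsub (pc m) (phi m)) <= Rpower dt (15/4) + Rpower h (15/4)) ->
    norm2 h N (gsub (rc (S n)) (rho (S n))) <= dt ^ 3 + h ^ 3.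
Proof.
intros a b gamma mu alpha chi theta epsS CS Ctau lam1 lam2 Hab Hg Hmu Hal Hchi Hth He HC HCt Hl1 Hl2.
set (Kd := Rpower lam2 (15/4) + 1).
set (KT := Ctau * (lam2 ^ 4 + 1)).
set (Kq := Kd + lam2 * KT).
set (Kp := Kq + Kd).
set (K := Kd + KT + Kq + Kp).
set (Kk := chi ^ 2 * lam2 / (4 * theta)).
set (Kc := chi * lam2 / (2 * theta)).
set (KF := 6 * (CS ^ 2 / (4 * (epsS / 2)))).
set (Lb := (b - a) ^ 3).
set (KX := lam2 * KF * (10 * Kd ^ 2 + 2 * lam2 ^ 8 * Lb)).
set (LL := LK epsS CS).
set (g := gamma * cK epsS CS).
set (A1 := gamma * LL * K + chi * K + 4 * Kk * K + Kc * K).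
set (A0 := gamma * LL * K ^ 2 + KX + chi * K ^ 2 + 2 * Kk * K ^ 2 + Kc * K ^ 2).
set (Bc := (A1 / g) ^ 2 + A0 / g + 2 * (A0 / g) ^ 2).
set (eta := etaK epsS CS).
assert (HKd : 1 <= Kd) by (unfold Kd; pose proof (exp_pos (15/4 * ln lam2)); unfold Rpower; lra).
assert (HKT : 0 < KT) by (unfold KT; apply Rmult_lt_0_compat; [lra|]; pose proof (pow2_ge_0 (lam2^2)); simpl in *; nra).
assert (HKq : 0 < Kq) by (unfold Kq; pose proof (Rmult_lt_0_compat lam2 KT Hl2 HKT); lra).
assert (HKp : 0 < Kp) by (unfold Kp; lra).
assert (HK : 0 < K) by (unfold K; lra).
assert (Hc1 : 0 < c1K CS) by (unfold c1K; apply Rdiv_lt_0_compat; lra).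
assert (HL1 : 0 < L1K epsS CS) by (unfold L1K; apply Rdiv_lt_0_compat; [pose proof (pow_lt CS 2 HC); lra| pose proof (pow_lt epsS 3 He); lra]).
assert (HL2 : 0 < L2K epsS CS) by (unfold L2K; apply Rdiv_lt_0_compat; [lra| pose proof (pow_lt epsS 2 He); lra]).
assert (HLL : 0 <= LL) by (unfold LL, LK; lra).
assert (HcK : 0 < cK epsS CS) by (unfold cK; apply Rmult_lt_0_compat; auto; apply Rmin_pos; lra).
assert (Hgp : 0 < g) by (unfold g; apply Rmult_lt_0_compat; auto).
assert (Heta : 0 < eta) by (unfold eta, etaK; apply Rmin_pos; [lra|]; apply Rdiv_lt_0_compat; [apply Rmult_lt_0_compat; lra|lra]).
assert (HKk : 0 <= Kk) by (unfold Kk; apply Rmult_le_pos; [apply Rmult_le_pos; [apply pow2_ge_0|lra]|left; apply Rinv_0_lt_compat; lra]).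
assert (HKc : 0 <= Kc) by (unfold Kc; apply Rmult_le_pos; [apply Rmult_le_pos; lra|left; apply Rinv_0_lt_compat; lra]).
assert (HKF : 0 <= KF) by (unfold KF; apply Rmult_le_pos; [lra|]; apply Rmult_le_pos; [apply pow2_ge_0|left; apply Rinv_0_lt_compat; lra]).
assert (HLb : 0 < Lb) by (unfold Lb; apply pow_lt; lra).
assert (HKX : 0 <= KX).
{ unfold KX. apply Rmult_le_pos. apply Rmult_le_pos; lra.
  assert (0 <= Kd^2) by apply pow2_ge_0. assert (0 <= lam2^8) by (apply pow_le; lra).
  assert (0 <= lam2 ^ 8 * Lb) by (apply Rmult_le_pos; lra). lra. }
assert (HA1 : 0 <= A1).
{ unfold A1. assert (0 <= gamma * LL * K) by (apply Rmult_le_pos; [apply Rmult_le_pos|]; lra).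
  assert (0 <= chi * K) by (apply Rmult_le_pos; lra). assert (0 <= Kk * K) by (apply Rmult_le_pos; lra).
  assert (0 <= Kc * K) by (apply Rmult_le_pos; lra). lra. }
assert (HK2 : 0 <= K ^ 2) by apply pow2_ge_0.
assert (HA0 : 0 <= A0).
{ unfold A0. assert (0 <= gamma * LL * K^2) by (apply Rmult_le_pos; [apply Rmult_le_pos|]; lra).
  assert (0 <= chi * K^2) by (apply Rmult_le_pos; lra). assert (0 <= Kk * K^2) by (apply Rmult_le_pos; lra).
  assert (0 <= Kc * K^2) by (apply Rmult_le_pos; lra). lra. }
assert (HBc : 0 <= Bc).
{ unfold Bc. assert (0 <= A0 / g) by (apply Rmult_le_pos; [lra|left; apply Rinv_0_lt_compat; lra]).
  pose proof (pow2_ge_0 (A1/g)). pose proof (pow2_ge_0 (A0/g)). lra. }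
assert (HCl : 0 < CS * lam2) by (apply Rmult_lt_0_compat; lra).
set (h0 := Rmin (Rmin 1 (1 / (8 * (A1/g)^2 + 1))) (Rmin (1 / (2 * Bc + 1)) (Rmin (eta / (Kq + Kd + 1)) (epsS / ((CS * lam2 + 4 * Kd) + 1))))).
exists 1, h0. split; [lra|]. split.
{ unfold h0. repeat apply Rmin_pos; try lra; apply Rdiv_lt_0_compat; try lra.
  pose proof (pow2_ge_0 (A1/g)); lra. }
intros N dt HN h Hdt _ Hh0 _ Hl2h n rho phi rc pc taur tauf Hn Hsch Hpos Hpert HTr HTf _ _ Hiii Hiii2 Hiv Hapr.
assert (HNr : 1 <= INR N) by (apply (le_INR 1 N) in HN; simpl in HN; lra).
assert (Hh : 0 < h) by (unfold h; apply Rdiv_lt_0_compat; lra).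
assert (HhN : h * INR N = b - a) by (unfold h; field; lra).
clearbody h.
assert (Hh1 : h <= 1) by (eapply Rle_trans; [apply Hh0|]; unfold h0; eapply Rle_trans; [apply Rmin_l|apply Rmin_l]).
assert (HhA : 8 * (A1 / g) ^ 2 * h <= 1).
{ apply small_h; auto. pose proof (pow2_ge_0 (A1/g)); lra.
  eapply Rle_trans; [apply Hh0|]; unfold h0; eapply Rle_trans; [apply Rmin_l|apply Rmin_r]. }
assert (HhB : 2 * Bc * h <= 1).
{ apply small_h; auto. lra. eapply Rle_trans; [apply Hh0|]; unfold h0; eapply Rle_trans; [apply Rmin_r|apply Rmin_l]. }
assert (Hheta : (Kq + Kd) * h <= eta).
{ apply small_h'; auto. lra. eapply Rle_trans; [apply Hh0|]; unfold h0; eapply Rle_trans; [apply Rmin_r|]; eapply Rle_trans; [apply Rmin_r|apply Rmin_l]. }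
assert (Hhe : (CS * lam2 + 4 * Kd) * h <= epsS).
{ apply small_h'; auto. lra. eapply Rle_trans; [apply Hh0|]; unfold h0; eapply Rle_trans; [apply Rmin_r|]; eapply Rle_trans; [apply Rmin_r|apply Rmin_r]. }
assert (Hdtl : dt <= lam2) by (assert (lam2 * h <= lam2 * 1) by (apply Rmult_le_compat_l; lra); lra).
assert (Hh2 : h ^ 2 <= h) by (simpl; nra).
set (z := h ^ 3 * sqrt h).
assert (Hsh : 0 < sqrt h) by (apply sqrt_lt_R0; lra).
assert (Hz : 0 < z) by (unfold z; apply Rmult_lt_0_compat; [apply pow_lt|]; lra).
assert (Hz2 : z ^ 2 = h ^ 7) by (unfold z; apply z_sq; lra).
assert (Hdel : Rpower dt (15/4) + Rpower h (15/4) <= Kd * z) by (unfold Kd, z; apply delta_bound; lra).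
assert (Htau : Ctau * (dt ^ 4 + h ^ 4) <= KT * z) by (unfold KT, z; apply tau_bound; lra).
assert (HeC : epsS <= CS).
{ destruct (Hiii n ltac:(lia)) as [X _]. specialize (X 1%nat 1%nat 1%nat ltac:(lia) ltac:(lia) ltac:(lia)). lra. }
set (e := gsub (rc (S n)) (rho (S n))).
set (r0 := gsub (rc n) (rho n)).
set (r1 := gsub (rc (pred n)) (rho (pred n))).
set (f0 := gsub (pc n) (phi n)).
set (s := fun i j k => (pc (S n) i j k - phi (S n) i j k) + (pc n i j k - phi n i j k)).
set (w := fun i j k => e i j k + r0 i j k).
set (q := fun i j k => r0 i j k + dt * taur i j k).
set (P := fun i j k => Rabs (q i j k) + Rabs (r0 i j k)).
set (E := norm2 h N e). set (R0 := norm2 h N r0). set (R1 := norm2 h N r1). set (F0 := norm2 h N f0).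
set (Sn := norm2 h N s). set (Q := norm2 h N q). set (PP := norm2 h N P).
set (Tr := norm2 h N taur). set (T1 := norm2 h N tauf).
assert (HE0 : 0 <= E) by apply norm2_nonneg. assert (HR00 : 0 <= R0) by apply norm2_nonneg.
assert (HR10 : 0 <= R1) by apply norm2_nonneg. assert (HF00 : 0 <= F0) by apply norm2_nonneg.
assert (HS0 : 0 <= Sn) by apply norm2_nonneg. assert (HQ0 : 0 <= Q) by apply norm2_nonneg.
assert (HPP0 : 0 <= PP) by apply norm2_nonneg. assert (HTr0 : 0 <= Tr) by apply norm2_nonneg.
assert (HT10 : 0 <= T1) by apply norm2_nonneg.
assert (HR0 : R0 <= Kd * z) by (destruct (Hapr n ltac:(lia)) as [X _]; unfold R0, r0; lra).
assert (HF0 : F0 <= Kd * z) by (destruct (Hapr n ltac:(lia)) as [_ X]; unfold F0, f0; lra).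
assert (HR1 : R1 <= Kd * z) by (destruct (Hapr (pred n) ltac:(lia)) as [X _]; unfold R1, r1; lra).
assert (HTr' : Tr <= KT * z) by (unfold Tr; lra).
assert (HT1' : T1 <= KT * z) by (unfold T1; lra).
assert (HQ : Q <= Kq * z).
{ unfold Q, q. eapply Rle_trans; [apply norm2_plus; auto|]. rewrite norm2_scal by auto. rewrite Rabs_right by lra.
  fold R0 Tr. assert (dt * Tr <= lam2 * (KT * z)) by (apply Rmult_le_compat; lra). unfold Kq. lra. }
assert (HPP : PP <= Kp * z).
{ unfold PP, P. eapply Rle_trans; [apply norm2_plus; auto|]. rewrite !norm2_abs. fold Q R0. unfold Kp. lra. }
assert (Ppt : forall (f : grid) Kf, 0 <= Kf -> norm2 h N f <= Kf * z ->
   on_cells N (fun i j k => Rabs (f i j k) <= Kf * h ^ 2)).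
{ intros f Kf HKf Hf i j k Hi Hj Hk. eapply Rle_trans. apply (pt_abs_le h N f i j k); auto. apply pt_small; auto. }
assert (Pr0 : on_cells N (fun i j k => Rabs (r0 i j k) <= Kd * h ^ 2)) by (apply Ppt; [lra|exact HR0]).
assert (Pr1 : on_cells N (fun i j k => Rabs (r1 i j k) <= Kd * h ^ 2)) by (apply Ppt; [lra|exact HR1]).
assert (Pq : on_cells N (fun i j k => Rabs (q i j k) <= Kq * h ^ 2)) by (apply Ppt; [lra|exact HQ]).
assert (HKdh : Kd * h ^ 2 <= eta).
{ assert (Kd * h^2 <= Kd * h) by (apply Rmult_le_compat_l; lra).
  assert (Kq * h >= 0) by (apply Rle_ge; apply Rmult_le_pos; lra). lra. }
assert (HKqh : Kq * h ^ 2 <= eta).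
{ assert (Kq * h^2 <= Kq * h) by (apply Rmult_le_compat_l; lra).
  assert (Kd * h >= 0) by (apply Rle_ge; apply Rmult_le_pos; lra). lra. }
destruct Hsch as [Hsr Hsp]. destruct Hpert as [Hpr Hpp].
assert (HS : Sn <= 2 * F0 + dt / theta * (chi / 2 * (E + R0) + T1)).
{ assert (X : Sn <= 2 * F0 + dt / theta * (chi / 2 * norm2 h N w + T1)).
  { unfold Sn, F0, T1. apply phi_step with (mu := mu) (alpha := alpha); auto.
    intros i j k Hi Hj Hk. specialize (Hsp i j k Hi Hj Hk). specialize (Hpp i j k Hi Hj Hk).
    pose proof (lap_minus h N (pc (S n)) (pc n) (phi (S n)) (phi n) ltac:(lra) i j k) as L.
    unfold s, w, e, r0, f0, gsub. rewrite <- L.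
    assert (theta * ((pc (S n) i j k - phi (S n) i j k + (pc n i j k - phi n i j k)) - 2 * (pc n i j k - phi n i j k)) / dt
       = theta * (pc (S n) i j k - pc n i j k) / dt - theta * (phi (S n) i j k - phi n i j k) / dt) by (field; lra).
    rewrite H, Hpp, Hsp. ring. }
  assert (norm2 h N w <= E + R0) by (unfold w, E, R0; apply norm2_plus; auto).
  assert (0 <= dt / theta * (chi / 2)) by (apply Rmult_le_pos; [apply Rmult_le_pos; [lra|left; apply Rinv_0_lt_compat; lra]|lra]).
  assert (dt / theta * (chi / 2) * norm2 h N w <= dt / theta * (chi / 2) * (E + R0)) by (apply Rmult_le_compat_l; auto).
  nra. }
set (bb := fun i j k => 3/2 * rc n i j k - 1/2 * rc (pred n) i j k).
set (rh := rhohat dt (rho n) (rho (pred n))).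
set (Vc := potential gamma chi theta dt (rc (S n)) (rc n) (pc (S n)) (pc n)).
set (V := potential gamma chi theta dt (rho (S n)) (rho n) (phi (S n)) (phi n)).
destruct (Hiii n ltac:(lia)) as [Hrcn _].
destruct (Hiii (S n) ltac:(lia)) as [Hrcn1 _].
destruct (Hiii2 n ltac:(lia)) as [Hdiff _].
assert (Hbb : on_cells N (fun i j k => epsS - CS * dt / 2 <= bb i j k)).
{ intros i j k Hi Hj Hk. pose proof (norminf_pt N (gsub (rc n) (rc (pred n))) i j k Hi Hj Hk) as X.
  apply Rabs_le_inv in X. assert (gsub (rc n) (rc (pred n)) i j k = rc n i j k - rc (pred n) i j k) by reflexivity.
  specialize (Hrcn i j k Hi Hj Hk). unfold bb. lra. }
assert (HCdt : CS * dt <= CS * lam2 * h) by (rewrite Rmult_assoc; apply Rmult_le_compat_l; lra).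
assert (HKdh2 : Kd * h ^ 2 <= Kd * h) by (apply Rmult_le_compat_l; lra).
assert (Hrh : on_cells N (fun i j k => epsS / 2 <= rh i j k)).
{ intros i j k Hi Hj Hk. unfold rh, rhohat. eapply Rle_trans; [|apply sqrt_ge_x; apply pow_le; lra].
  specialize (Hbb i j k Hi Hj Hk). specialize (Pr0 i j k Hi Hj Hk). specialize (Pr1 i j k Hi Hj Hk).
  apply Rabs_le_inv in Pr0. apply Rabs_le_inv in Pr1. unfold bb, r0, r1, gsub in *. lra. }
assert (HVc : gradinf h N Vc <= CS) by (cbv zeta in Hiv; fold Vc in Hiv; pose proof (norminf_nonneg N Vc); lra).
assert (HIW : ip h N (fun i j k => e i j k - q i j k) (fun i j k => Vc i j k - V i j k) <= KX * z ^ 2).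
{ eapply Rle_trans.
  { apply (rho_flux h N dt (epsS/2) CS e q bb Vc rh V); auto; try lra.
    - intros i j k Hi Hj Hk. specialize (Hsr i j k Hi Hj Hk). specialize (Hpr i j k Hi Hj Hk).
      fold bb Vc in Hpr. fold rh V in Hsr.
      unfold e, q, r0, gsub. rewrite <- Hsr.
      replace (divDgrad h N bb Vc i j k) with ((rc (S n) i j k - rc n i j k) / dt - taur i j k) by lra.
      field; lra.
    - intros i j k Hi Hj Hk. destruct (gradinf_pt h N Vc i j k Hi Hj Hk) as [X1 [X2 X3]]. lra. }
  assert (Hsum : h ^ 3 * sum3 N (fun i j k => (bb i j k - rh i j k) ^ 2) <= 9 * R0 ^ 2 + R1 ^ 2 + 2 * dt ^ 8 * Lb).
  { apply Rle_trans with (h ^ 3 * sum3 N (fun i j k => (9 * (r0 i j k * r0 i j k) + r1 i j k * r1 i j k) + 2 * dt ^ 8)).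
    { apply Rmult_le_compat_l; [apply pow_le; lra|]. apply sum3_le; intros i j k Hi Hj Hk.
      assert (Hb0 : 0 <= bb i j k).
      { specialize (Hbb i j k Hi Hj Hk). assert (CS * lam2 * h <= epsS) by nra. lra. }
      pose proof (rh_close (bb i j k) (3/2 * rho n i j k - 1/2 * rho (pred n) i j k) (dt ^ 4) Hb0 ltac:(apply pow_le; lra)) as X.
      unfold rh, rhohat. replace (dt ^ 8) with ((dt ^ 4) ^ 2) by ring.
      assert (bb i j k - (3 / 2 * rho n i j k - 1 / 2 * rho (pred n) i j k) = 3/2 * r0 i j k - 1/2 * r1 i j k)
        by (unfold bb, r0, r1, gsub; ring).
      rewrite H in X. assert (0 <= (3 * r0 i j k + r1 i j k) ^ 2) by apply pow2_ge_0. nra. }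
    rewrite sum3_plus, sum3_plus, sum3_scal, sum3_const.
    assert (E0 : h^3 * sum3 N (fun i j k => r0 i j k * r0 i j k) = R0^2) by (unfold R0; rewrite norm2_sq by auto; reflexivity).
    assert (E1 : h^3 * sum3 N (fun i j k => r1 i j k * r1 i j k) = R1^2) by (unfold R1; rewrite norm2_sq by auto; reflexivity).
    assert (EN : h^3 * (INR N ^ 3 * (2 * dt ^ 8)) = 2 * dt ^ 8 * Lb) by (unfold Lb; rewrite <- HhN; ring).
    lra. }
  fold KF.
  set (X := h ^ 3 * sum3 N (fun i j k => (bb i j k - rh i j k) ^ 2)) in *.
  assert (HX0 : 0 <= X) by (unfold X; apply Rmult_le_pos; [apply pow_le; lra|apply sum3_nonneg; intros i j k _ _ _; apply pow2_ge_0]).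
  assert (R0 ^ 2 <= (Kd * z) ^ 2) by (apply pow_incr; lra).
  assert (R1 ^ 2 <= (Kd * z) ^ 2) by (apply pow_incr; lra).
  assert (Hd8 : dt ^ 8 <= lam2 ^ 8 * z ^ 2).
  { rewrite Hz2. assert (dt ^ 8 <= (lam2 * h) ^ 8) by (apply pow_incr; lra).
    assert (h ^ 8 <= h ^ 7) by (replace (h^8) with (h^7 * h) by ring; assert (0 < h^7) by (apply pow_lt; lra); nra).
    assert (0 < lam2 ^ 8) by (apply pow_lt; lra).
    replace ((lam2 * h) ^ 8) with (lam2 ^ 8 * h ^ 8) in H1 by ring. nra. }
  assert (X <= (10 * Kd ^ 2 + 2 * lam2 ^ 8 * Lb) * z ^ 2).
  { replace ((Kd * z) ^ 2) with (Kd ^ 2 * z ^ 2) in * by ring.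
    assert (2 * dt ^ 8 * Lb <= 2 * (lam2 ^ 8 * z ^ 2) * Lb) by (apply Rmult_le_compat_r; lra). nra. }
  unfold KX. replace (lam2 * KF * (10 * Kd ^ 2 + 2 * lam2 ^ 8 * Lb) * z ^ 2) with (lam2 * KF * ((10 * Kd ^ 2 + 2 * lam2 ^ 8 * Lb) * z ^ 2)) by ring.
  apply Rmult_le_compat; try lra. apply Rmult_le_pos; lra. apply Rmult_le_compat_r; lra. }
set (G := fun i j k => Sh (rc (S n) i j k) (rc n i j k) - Sh (rho (S n) i j k) (rho n i j k)).
set (eq_ := fun i j k => e i j k - q i j k).
assert (Hid : gamma * ip h N eq_ G = ip h N eq_ (fun i j k => Vc i j k - V i j k) + chi / 2 * ip h N eq_ s
   - chi ^ 2 * dt / (4 * theta) * ip h N eq_ (fun i j k => e i j k - r0 i j k)).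
{ unfold ip. transitivity (h ^ 3 * sum3 N (fun i j k => (eq_ i j k * (Vc i j k - V i j k) + chi / 2 * (eq_ i j k * s i j k))
     - chi ^ 2 * dt / (4 * theta) * (eq_ i j k * (e i j k - r0 i j k)))).
  - rewrite <- Rmult_assoc, (Rmult_comm gamma), Rmult_assoc, <- sum3_scal. f_equal. apply sum3_ext.
    intros i j k _ _ _. unfold eq_, G, Vc, V, potential, s, e, r0, q, gsub. ring.
  - rewrite sum3_minus, sum3_plus, !sum3_scal. ring. }
assert (HIs : ip h N eq_ s <= (E + Q) * Sn).
{ eapply Rle_trans; [apply ip_cs; auto|]. fold Sn. apply Rmult_le_compat_r; auto.
  unfold eq_. apply norm2_minus; auto. }
assert (HIe : E ^ 2 - E * R0 - Q * E - Q * R0 <= ip h N eq_ (fun i j k => e i j k - r0 i j k)).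
{ assert (X : ip h N eq_ (fun i j k => e i j k - r0 i j k) = ip h N e e - ip h N e r0 - ip h N q e + ip h N q r0).
  { unfold ip. rewrite <- !Rmult_minus_distr_l, <- Rmult_plus_distr_l. f_equal.
    rewrite <- !sum3_minus, <- sum3_plus. apply sum3_ext; intros i j k _ _ _. unfold eq_. ring. }
  rewrite X. rewrite <- (norm2_sq h N e) by auto. fold E.
  pose proof (ip_cs h N e r0 Hh). pose proof (ip_cs h N q e Hh). pose proof (ip_abs_cs h N q r0 Hh).
  fold E R0 Q in H, H0, H1. apply Rabs_le_inv in H1. nra. }
set (M := h ^ 3 * sum3 N (fun i j k => mK (e i j k))).
assert (HM0 : 0 <= M) by (unfold M; apply Rmult_le_pos; [apply pow_le; lra|apply sum3_nonneg; intros i j k _ _ _; apply mK_nonneg]).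
assert (HIG : cK epsS CS * M - LL * PP * E - LL * PP ^ 2 <= ip h N eq_ G).
{ unfold M, PP, E, eq_. apply coerc_sum; auto.
  - intros i j k _ _ _. unfold P. pose proof (Rabs_pos (q i j k)). pose proof (Rabs_pos (r0 i j k)). lra.
  - intros i j k Hi Hj Hk. unfold P, G, LL.
    destruct (Hrcn1 i j k Hi Hj Hk). destruct (Hrcn i j k Hi Hj Hk).
    pose proof (key_pt epsS CS (rc (S n) i j k) (rc n i j k) (rho n i j k) (rho (S n) i j k) (q i j k) eta He HeC
      ltac:(lra) ltac:(lra)) as KP.
    assert (Er : r0 i j k = rc n i j k - rho n i j k) by reflexivity.
    assert (Ee : e i j k = rc (S n) i j k - rho (S n) i j k) by reflexivity.
    rewrite Er, Ee. replace (rc (S n) i j k - rho (S n) i j k - q i j k) with (rc (S n) i j k - rho (S n) i j k - q i j k) by ring.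
    apply KP.
    + rewrite <- Er. specialize (Pr0 i j k Hi Hj Hk). lra.
    + specialize (Pq i j k Hi Hj Hk). lra.
    + unfold eta; lra.
    + apply Hpos; auto. }
assert (HEM : E ^ 2 <= M + M ^ 2 / h ^ 3) by (unfold E, M; apply E_from_M; auto).
assert (HKk2 : chi ^ 2 * dt / (4 * theta) <= Kk).
{ unfold Kk. unfold Rdiv. apply Rmult_le_compat_r. left; apply Rinv_0_lt_compat; lra.
  apply Rmult_le_compat_l; [apply pow2_ge_0|lra]. }
assert (HKc2 : chi * dt / (2 * theta) <= Kc).
{ unfold Kc. unfold Rdiv. apply Rmult_le_compat_r. left; apply Rinv_0_lt_compat; lra.
  apply Rmult_le_compat_l; lra. }
assert (HKz : forall X Y, 0 <= Y -> X <= Y * z -> Y <= K -> X <= K * z).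
{ intros. assert (Y * z <= K * z) by (apply Rmult_le_compat_r; lra). lra. }
pose proof (alg1 gamma (cK epsS CS) LL chi theta dt E M R0 F0 Q PP T1 Sn (ip h N eq_ G)
  (ip h N eq_ (fun i j k => Vc i j k - V i j k)) (ip h N eq_ s) (ip h N eq_ (fun i j k => e i j k - r0 i j k))
  (KX * z ^ 2) K KX Kk Kc z Hg HcK HLL Hchi Hth Hdt HE0 HM0 HR00 HF00 HQ0 HPP0 HT10 HS0 HS Hid HIW HIs HIe HIG Hz
  ltac:(lra) ltac:(apply (HKz _ Kp); unfold K; lra) ltac:(apply (HKz _ Kd); unfold K; lra)
  ltac:(apply (HKz _ Kd); unfold K; lra) ltac:(apply (HKz _ Kq); unfold K; lra) ltac:(apply (HKz _ KT); unfold K; lra)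
  ltac:(lra) HKk2 HKc2) as HA.
assert (Hfin : E <= h ^ 3).
{ apply (alg2 h z g E M A1 A0); auto; unfold g, A1, A0; lra. }
assert (0 <= dt ^ 3) by (apply pow_le; lra).
lra.
Qed.
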